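(* Suppose $h\in C^2(\overline R)$ with finite $C^2$ norm solves the height equation with $\inf_Rh_p>0$, and that $h(q,p)\to H_\pm(p)$ pointwise as $q\to\pm\infty$ for some functions $H_\pm$. If $\mathscr S(H_+)=\mathscr S(H_-)=\mathscr S(H)$ and either $H_+\ge H$ on $[-1,0]$ or $H_+\le H$ on $[-1,0]$, then $H_+\equiv H$. The same holds with $H_+$ replaced by $H_-$.
   Context: Fix $\alpha\in(0,1)$, $\rho\in C^{2+\alpha}([-1,0])$ with $\rho>0$, $\rho_p\le0$, $H\in C^{3+\alpha}([-1,0])$ with $H(-1)=0$, $H(0)=1$, $H_p>0$, and $F>0$. Let $R=\mathbb R\times(-1,0)$ (coordinates $(q,p)$), $T=\mathbb R\times\{0\}$, $B=\mathbb R\times\{-1\}$. The height equation for $h$ is $\big(-\frac{1+h_q^2}{2h_p^2}+\frac1{2H_p^2}\big)_p+\big(\frac{h_q}{h_p}\big)_q-\frac1{F^2}\rho_p(h-H)=0$ in $R$, $\frac{1+h_q^2}{2h_p^2}-\frac1{2H_p^2}+\frac1{F^2}\rho(h-1)=0$ on $T$, $h=0$ on $B$. The flow force of a $q$-independent function $K=K(p)$ with $K_p>0$ is $\mathscr S(K)=\int_{-1}^0\Big[\frac1{2K_p^2}+\frac1{2H_p^2}-\frac1{F^2}\rho(K-H)-\frac1{F^2}\int_0^p\rho H_p\,dp'\Big]K_p\,dp$. *)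

(* Defs.v *)
From Stdlib Require Import Reals Lra.
From Coquelicot Require Import Coquelicot.
Open Scope R_scope.

(* The closed interval [-1,0] (the p-range of the closed strip). *)
Definition Icl (x : R) : Prop := -1 <= x <= 0.

Definition is_derive_I (f : R -> R) (x l : R) : Prop :=
  filterlim (fun y => (f y - f x) / (y - x))
    (within (fun y => Icl y /\ y <> x) (locally x)) (locally l).

Definition derive_on_I (f f' : R -> R) : Prop :=
  forall x, Icl x -> is_derive_I f x (f' x).

Definition holder_I (alpha : R) (f : R -> R) : Prop :=
  exists C, forall x y, Icl x -> Icl y ->
    Rabs (f x - f y) <= C * Rpower (Rabs (x - y)) alpha.

Definition C2a_I (alpha : R) (f f1 f2 : R -> R) : Prop :=
  derive_on_I f f1 /\ derive_on_I f1 f2 /\ holder_I alpha f2.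

Definition C3a_I (alpha : R) (f f1 f2 f3 : R -> R) : Prop :=
  derive_on_I f f1 /\ derive_on_I f1 f2 /\ derive_on_I f2 f3 /\ holder_I alpha f3.

Definition cont_strip (g : R -> R -> R) : Prop :=
  forall q p, Icl p ->
    filterlim (fun z : R * R => g (fst z) (snd z))
      (within (fun z : R * R => Icl (snd z)) (locally (q, p))) (locally (g q p)).

Definition bdd_strip (g : R -> R -> R) : Prop :=
  exists M, forall q p, Icl p -> Rabs (g q p) <= M.

Definition C2_bdd_strip (h hq hp hqq hqp hpq hpp : R -> R -> R) : Prop :=
  (forall q p, Icl p ->
     is_derive (fun q' => h q' p) q (hq q p) /\
     is_derive_I (fun p' => h q p') p (hp q p) /\
     is_derive (fun q' => hq q' p) q (hqq q p) /\
     is_derive_I (fun p' => hq q p') p (hqp q p) /\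
     is_derive (fun q' => hp q' p) q (hpq q p) /\
     is_derive_I (fun p' => hp q p') p (hpp q p)) /\
  cont_strip h /\ cont_strip hq /\ cont_strip hp /\ cont_strip hqq /\
  cont_strip hqp /\ cont_strip hpq /\ cont_strip hpp /\
  bdd_strip h /\ bdd_strip hq /\ bdd_strip hp /\ bdd_strip hqq /\
  bdd_strip hqp /\ bdd_strip hpq /\ bdd_strip hpp.

(* The height equation (interior equation, top and bottom boundary conditions);
   H1 = H_p and rho1 = rho_p. *)
Definition height_eq (rho rho1 H H1 : R -> R) (F : R) (h hq hp : R -> R -> R) : Prop :=
  (forall q p, -1 < p < 0 ->
     exists A B,
       is_derive (fun p' => - (1 + (hq q p')^2) / (2 * (hp q p')^2)
                            + / (2 * (H1 p')^2)) p A /\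
       is_derive (fun q' => hq q' p / hp q' p) q B /\
       A + B - / F^2 * rho1 p * (h q p - H p) = 0) /\
  (forall q, (1 + (hq q 0)^2) / (2 * (hp q 0)^2) - / (2 * (H1 0)^2)
             + / F^2 * rho 0 * (h q 0 - 1) = 0) /\
  (forall q, h q (-1) = 0).

(* Flow force of a q-independent K (its derivative K_p taken as Derive K;
   only values on (-1,0) matter for the Riemann integral). *)
Definition flow_force (rho H H1 : R -> R) (F : R) (K : R -> R) : R :=
  RInt (fun p =>
          (/ (2 * (Derive K p)^2) + / (2 * (H1 p)^2)
           - / F^2 * rho p * (K p - H p)
           - / F^2 * RInt (fun t => rho t * H1 t) 0 p) * Derive K p) (-1) 0.

(* Main.v *)
Require Import Defs.
From Stdlib Require Import Reals Lra Lia ZArith ClassicalEpsilon.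
From Coquelicot Require Import Coquelicot.
Open Scope R_scope.

Lemma ball_R (x e y : R) : ball x e y <-> Rabs (y - x) < e.
Proof. reflexivity. Qed.

Lemma derI_eps f x l : is_derive_I f x l -> forall eps, 0 < eps ->
  exists d, 0 < d /\ forall y, Icl y -> y <> x -> Rabs (y - x) < d ->
    Rabs ((f y - f x) / (y - x) - l) < eps.
Proof.
  intros H eps He.
  destruct (proj1 (filterlim_locally _ _) H (mkposreal eps He)) as [d Hd].
  exists d; split; [apply cond_pos|].
  intros y Hy Hyx Hyd. apply (Hd y); [exact Hyd| split; assumption].
Qed.

Definition clamp (x : R) : R := Rmax (-1) (Rmin 0 x).
Definition contI (f : R -> R) : Prop := forall x, continuity_pt (fun y => f (clamp y)) x.

Lemma clamp_Icl x : Icl (clamp x).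
Proof. unfold clamp, Icl, Rmax, Rmin; repeat destruct Rle_dec; lra. Qed.

Lemma clamp_id x : Icl x -> clamp x = x.
Proof. unfold clamp, Icl, Rmax, Rmin; intros; repeat destruct Rle_dec; lra. Qed.

Lemma clamp_lip x y : Rabs (clamp x - clamp y) <= Rabs (x - y).
Proof. unfold clamp, Rmax, Rmin; repeat destruct Rle_dec; unfold Rabs; repeat destruct Rcase_abs; lra. Qed.

Lemma contI_of_eps f :
  (forall x, Icl x -> forall eps, 0 < eps -> exists d, 0 < d /\
     forall y, Icl y -> Rabs (y - x) < d -> Rabs (f y - f x) < eps) -> contI f.
Proof.
  intros H x. apply continuity_pt_locally. intros eps.
  destruct (H (clamp x) (clamp_Icl x) eps (cond_pos eps)) as [d [Hd Hy]].
  exists (mkposreal d Hd). intros u Hu. apply (Hy (clamp u)). apply clamp_Icl.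
  eapply Rle_lt_trans. apply clamp_lip. exact Hu.
Qed.

Lemma contI_eps f : contI f -> forall x, Icl x -> forall eps, 0 < eps -> exists d, 0 < d /\
     forall y, Icl y -> Rabs (y - x) < d -> Rabs (f y - f x) < eps.
Proof.
  intros H x Hx eps He.
  destruct (proj1 (continuity_pt_locally _ _) (H x) (mkposreal eps He)) as [d Hd].
  exists d; split; [apply cond_pos|]. intros y Hy Hyx.
  specialize (Hd y Hyx). simpl in Hd. rewrite !clamp_id in Hd; auto.
Qed.

Lemma locally_interior x : -1 < x < 0 -> locally x (fun y => Icl y).
Proof.
  intros Hx. assert (Hd : 0 < Rmin (x + 1) (- x)) by (apply Rmin_pos; lra).
  exists (mkposreal _ Hd). intros y Hy0.
  assert (Hy : Rabs (y - x) < Rmin (x+1) (-x)) by exact Hy0.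
  apply Rabs_def2 in Hy. unfold Icl. revert Hy; unfold Rmin; destruct (Rle_dec _ _); intros; lra.
Qed.

Lemma locally_clamp (f : R -> R) x : -1 < x < 0 -> locally x (fun y => f (clamp y) = f y).
Proof.
  intros Hx. generalize (locally_interior x Hx). apply filter_imp.
  intros y Hy. rewrite clamp_id; auto.
Qed.

Lemma contI_interior f x : contI f -> -1 < x < 0 -> continuity_pt f x.
Proof.
  intros H Hx. apply continuity_pt_ext_loc with (fun y => f (clamp y)).
  apply locally_clamp; auto. apply H.
Qed.

Lemma contI_interior_c f x : contI f -> -1 < x < 0 -> continuous f x.
Proof. intros H Hx. apply continuity_pt_filterlim. apply contI_interior; auto. Qed.

Lemma exRInt_I f a b : contI f -> -1 <= a -> a <= b -> b <= 0 -> ex_RInt f a b.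
Proof.
  intros H Ha Hab Hb. apply (ex_RInt_ext (V:=R_NormedModule) (fun y => f (clamp y))).
  { intros x Hx. rewrite Rmin_left in Hx by lra. rewrite Rmax_right in Hx by lra.
    rewrite clamp_id; auto. unfold Icl; lra. }
  apply (ex_RInt_continuous (V:=R_CompleteNormedModule)). intros z _. apply continuity_pt_filterlim. apply H.
Qed.

Lemma derI_cont f f' : derive_on_I f f' -> contI f.
Proof.
  intros H. apply contI_of_eps. intros x Hx eps He.
  destruct (derI_eps f x (f' x) (H x Hx) 1 Rlt_0_1) as [d [Hd Hy]].
  set (K := Rabs (f' x) + 1).
  assert (HK : 0 < K) by (unfold K; generalize (Rabs_pos (f' x)); lra).
  exists (Rmin d (eps / K)). split. apply Rmin_pos; auto. apply Rdiv_lt_0_compat; auto.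
  intros y Hy' Hyx. destruct (Req_dec y x) as [->|Hne].
  { rewrite Rminus_eq_0, Rabs_R0; auto. }
  assert (Hq := Hy y Hy' Hne (Rlt_le_trans _ _ _ Hyx (Rmin_l _ _))).
  assert (Hyx0 : y - x <> 0) by lra.
  assert (E : f y - f x = ((f y - f x) / (y - x)) * (y - x)) by (field; auto).
  rewrite E, Rabs_mult.
  assert (Hb : Rabs ((f y - f x) / (y - x)) <= K).
  { unfold K. replace ((f y - f x) / (y - x)) with (((f y - f x) / (y - x) - f' x) + f' x) by ring.
    eapply Rle_trans. apply Rabs_triang. lra. }
  assert (Hyx2 : Rabs (y - x) < eps / K) by (eapply Rlt_le_trans; [exact Hyx| apply Rmin_r]).
  assert (Hp := Rabs_pos (y - x)).
  apply Rle_lt_trans with (K * Rabs (y - x)).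
  apply Rmult_le_compat_r; auto.
  apply Rlt_le_trans with (K * (eps / K)). apply Rmult_lt_compat_l; auto.
  right; field; lra.
Qed.

Lemma derI_interior f x l : is_derive_I f x l -> -1 < x < 0 -> is_derive f x l.
Proof.
  intros H Hx. apply is_derive_Reals. intros eps He.
  destruct (derI_eps f x l H eps He) as [d [Hd Hy]].
  assert (Hd' : 0 < Rmin d (Rmin (x + 1) (- x))) by (repeat apply Rmin_pos; lra).
  exists (mkposreal _ Hd'). intros h Hh Hhd. simpl in Hhd.
  assert (Hh1 := Rlt_le_trans _ _ _ Hhd (Rmin_l _ _)).
  assert (Hh2 := Rlt_le_trans _ _ _ Hhd (Rmin_r _ _)).
  assert (Hh3 := Rlt_le_trans _ _ _ Hh2 (Rmin_l _ _)).
  assert (Hh4 := Rlt_le_trans _ _ _ Hh2 (Rmin_r _ _)).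
  replace h with (x + h - x) at 2 by ring.
  apply Hy.
  - apply Rabs_def2 in Hh3. apply Rabs_def2 in Hh4. unfold Icl. lra.
  - lra.
  - replace (x + h - x) with h by ring; auto.
Qed.

Lemma derI_interior' f f' x : derive_on_I f f' -> -1 < x < 0 -> is_derive f x (f' x).
Proof. intros H Hx. apply derI_interior; auto. apply H. unfold Icl; lra. Qed.

Lemma contI_plus f g : contI f -> contI g -> contI (fun x => f x + g x).
Proof. intros Hf Hg x. apply (continuity_pt_plus (fun y => f (clamp y)) (fun y => g (clamp y))); auto. Qed.
Lemma contI_minus f g : contI f -> contI g -> contI (fun x => f x - g x).
Proof. intros Hf Hg x. apply (continuity_pt_minus (fun y => f (clamp y)) (fun y => g (clamp y))); auto. Qed.
Lemma contI_mult f g : contI f -> contI g -> contI (fun x => f x * g x).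
Proof. intros Hf Hg x. apply (continuity_pt_mult (fun y => f (clamp y)) (fun y => g (clamp y))); auto. Qed.
Lemma contI_const c : contI (fun _ => c).
Proof. intros x. apply continuity_pt_const. intros a b; reflexivity. Qed.
Lemma contI_opp f : contI f -> contI (fun x => - f x).
Proof. intros Hf x. apply (continuity_pt_opp (fun y => f (clamp y))); auto. Qed.
Lemma contI_inv f : contI f -> (forall x, Icl x -> f x <> 0) -> contI (fun x => / f x).
Proof. intros Hf Hn x. apply (continuity_pt_inv (fun y => f (clamp y))); auto. apply Hn, clamp_Icl. Qed.
Lemma contI_ext f g : (forall x, Icl x -> f x = g x) -> contI f -> contI g.
Proof.
  intros He Hf x. apply continuity_pt_ext with (fun y => f (clamp y)); auto.
  intros y. apply He, clamp_Icl.
Qed.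

Lemma mvt_I (f df : R -> R) L x y : Icl x -> Icl y -> contI f ->
  (forall z, Rmin x y < z < Rmax x y -> is_derive f z (df z)) ->
  (forall z, Rmin x y <= z <= Rmax x y -> Rabs (df z) <= L) ->
  Rabs (f y - f x) <= L * Rabs (y - x).
Proof.
  intros Hx Hy Hf Hd Hb.
  destruct (MVT_gen (fun z => f (clamp z)) x y df) as [c [Hc Heq]].
  - intros z Hz. apply is_derive_ext_loc with f.
    + generalize (locally_clamp f z). intros Hl. eapply filter_imp; [|apply Hl].
      intros; simpl; auto.
      unfold Icl in *. revert Hz; unfold Rmin, Rmax; destruct Rle_dec; lra.
    + apply Hd; auto.
  - intros z _; apply Hf.
  - rewrite !clamp_id in Heq; auto. rewrite Heq, Rabs_mult.
    apply Rmult_le_compat_r. apply Rabs_pos. apply Hb; auto.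
Qed.

Lemma mvt_R (f df : R -> R) L x y :
  (forall z, Rmin x y <= z <= Rmax x y -> is_derive f z (df z)) ->
  (forall z, Rmin x y <= z <= Rmax x y -> Rabs (df z) <= L) ->
  Rabs (f y - f x) <= L * Rabs (y - x).
Proof.
  intros Hd Hb.
  destruct (MVT_gen f x y df) as [c [Hc Heq]].
  - intros z Hz. apply Hd; lra.
  - intros z Hz. apply continuity_pt_filterlim. apply (ex_derive_continuous (V:=R_NormedModule)). eexists. apply Hd; auto.
  - rewrite Heq, Rabs_mult.
    apply Rmult_le_compat_r. apply Rabs_pos. apply Hb; auto.
Qed.

Lemma nat_above T : exists N : nat, forall n, (N <= n)%nat -> T <= INR n.
Proof.
  destruct (archimed T) as [H1 _].
  exists (Z.to_nat (up T)). intros n Hn.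
  apply le_INR in Hn. rewrite INR_IZR_INZ in Hn.
  destruct (Z.lt_ge_cases (up T) 0) as [Hz|Hz].
  - apply IZR_lt in Hz. generalize (pos_INR n). lra.
  - rewrite Z2Nat.id in Hn by lia. lra.
Qed.

Lemma floor_nat (m : nat) : forall z, 0 <= z < INR m -> exists k, (k < m)%nat /\ INR k <= z < INR k + 1.
Proof.
  induction m as [|m IH]; intros z Hz.
  - simpl in Hz; lra.
  - destruct (Rlt_dec z (INR m)) as [Hl|Hl].
    + destruct (IH z) as [k [Hk1 Hk2]]. lra. exists k; split; auto.
    + exists m. rewrite S_INR in Hz. split; [lia| lra].
Qed.

Lemma cauchy_from_approx (u : R -> R) :
  (forall eps, 0 < eps -> exists c T, forall t, T <= t -> Rabs (u t - c) <= eps) ->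
  exists l, forall eps, 0 < eps -> exists T, forall t, T <= t -> Rabs (u t - l) < eps.
Proof.
  intros H.
  assert (Hc : ex_lim_seq_cauchy (fun n => u (INR n))).
  { intros eps. destruct (H (eps / 3)) as [c [T HT]]. destruct eps; simpl; lra.
    destruct (nat_above T) as [N HN]. exists N. intros n m Hn Hm.
    specialize (HT _ (HN _ Hn)) as H1. specialize (HT _ (HN _ Hm)) as H2.
    pose proof (cond_pos eps).
    replace (u (INR n) - u (INR m)) with ((u (INR n) - c) - (u (INR m) - c)) by ring.
    eapply Rle_lt_trans. apply Rabs_triang. rewrite Rabs_Ropp. lra. }
  apply ex_lim_seq_cauchy_corr in Hc. destruct Hc as [l Hl].
  exists l. intros eps He.
  destruct (H (eps / 3)) as [c [T HT]]. lra.
  apply is_lim_seq_spec in Hl. destruct (Hl (mkposreal (eps/3) ltac:(lra))) as [N1 HN1].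
  destruct (nat_above T) as [N HN].
  exists T. intros t Ht.
  specialize (HN1 (max N N1) ltac:(lia)). simpl in HN1.
  specialize (HT _ (HN _ (Nat.le_max_l N N1))) as H2.
  specialize (HT t Ht) as H1.
  replace (u t - l) with ((u t - c) - (u (INR (max N N1)) - c) + (u (INR (max N N1)) - l)) by ring.
  eapply Rle_lt_trans. apply Rabs_triang.
  eapply Rle_lt_trans. apply Rplus_le_compat_r. apply Rabs_triang. rewrite Rabs_Ropp. lra.
Qed.

Lemma unif_conv (u : R -> R -> R) (K : R -> R) L : 0 <= L ->
  (forall t x y, Icl x -> Icl y -> Rabs (u t y - u t x) <= L * Rabs (y - x)) ->
  (forall x y, Icl x -> Icl y -> Rabs (K y - K x) <= L * Rabs (y - x)) ->
  (forall x, Icl x -> forall eps, 0 < eps -> exists T, forall t, T <= t -> Rabs (u t x - K x) < eps) ->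
  forall eps, 0 < eps -> exists T, forall t, T <= t -> forall x, Icl x -> Rabs (u t x - K x) < eps.
Proof.
  intros HL Hu HK Hp eps He.
  destruct (nat_above (4 * L / eps + 1)) as [N0 HN0].
  set (N := S N0).
  assert (HNpos : 0 < INR N) by (apply lt_0_INR; unfold N; lia).
  assert (HNbig : 4 * L / eps + 1 <= INR N) by (apply HN0; unfold N; lia).
  set (xk := fun k : nat => - INR k / INR N).
  assert (Hxk : forall k, (k <= N)%nat -> Icl (xk k)).
  { intros k Hk. unfold xk, Icl. apply le_INR in Hk. generalize (pos_INR k). intros.
    split.
    - apply Rmult_le_reg_r with (INR N); auto. unfold Rdiv. rewrite Rmult_assoc, Rinv_l by lra. lra.
    - unfold Rdiv. rewrite Ropp_mult_distr_l_reverse.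
      assert (0 <= INR k * / INR N) by (apply Rmult_le_pos; auto; left; apply Rinv_0_lt_compat; auto).
      lra. }
  assert (Hfin : forall m, (m <= N)%nat -> exists T, forall k, (k <= m)%nat -> forall t, T <= t ->
     Rabs (u t (xk k) - K (xk k)) < eps / 2).
  { induction m as [|m IH]; intros Hm.
    - destruct (Hp (xk 0%nat) (Hxk 0%nat ltac:(lia)) (eps/2)) as [T HT]. lra.
      exists T. intros k Hk t Ht. replace k with 0%nat by lia. auto.
    - destruct IH as [T1 HT1]. lia.
      destruct (Hp (xk (S m)) (Hxk (S m) Hm) (eps/2)) as [T2 HT2]. lra.
      exists (Rmax T1 T2). intros k Hk t Ht.
      destruct (Nat.eq_dec k (S m)) as [->|Hne].
      + apply HT2. eapply Rle_trans; [apply Rmax_r|exact Ht].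
      + apply HT1. lia. eapply Rle_trans; [apply Rmax_l|exact Ht]. }
  destruct (Hfin N (Nat.le_refl N)) as [T HT].
  exists T. intros t Ht x Hx.
  assert (Hk : exists k, (k <= N)%nat /\ Rabs (xk k - x) <= / INR N).
  { destruct (Req_dec x (-1)) as [->|Hx1].
    - exists N. split; auto. unfold xk. replace (- INR N / INR N - -1) with 0 by (field; lra).
      rewrite Rabs_R0. left; apply Rinv_0_lt_compat; auto.
    - destruct (floor_nat N (- x * INR N)) as [k [Hk1 Hk2]].
      { unfold Icl in Hx. split. apply Rmult_le_pos; lra.
        assert (-x < 1) by lra. replace (INR N) with (1 * INR N) at 2 by ring.
        apply Rmult_lt_compat_r; auto. }
      exists k. split. lia. unfold xk.
      replace (- INR k / INR N - x) with ((- x * INR N - INR k) / INR N) by (field; lra).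
      unfold Rdiv. rewrite Rabs_mult, (Rabs_right (/ INR N)).
      2: { left; apply Rinv_0_lt_compat; auto. }
      replace (/ INR N) with (1 * / INR N) at 2 by ring.
      apply Rmult_le_compat_r. left; apply Rinv_0_lt_compat; auto.
      rewrite Rabs_right; lra. }
  destruct Hk as [k [Hk Hdk]].
  specialize (HT k Hk t Ht).
  assert (H1 := Hu t (xk k) x (Hxk k Hk) Hx).
  assert (H2 := HK x (xk k) Hx (Hxk k Hk)).
  assert (HLN : L * / INR N <= eps / 4).
  { apply Rmult_le_reg_r with (INR N); auto. rewrite Rmult_assoc, Rinv_l by lra.
    assert (L <= eps / 4 * (4 * L / eps)) by (right; field; lra).
    assert (0 <= eps / 4) by lra.
    nra. }
  assert (Hd1 : L * Rabs (x - xk k) <= eps / 4).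
  { rewrite <- Rabs_Ropp, Ropp_minus_distr. eapply Rle_trans; [|exact HLN].
    apply Rmult_le_compat_l; auto. }
  assert (Hd2 : L * Rabs (xk k - x) <= eps / 4).
  { eapply Rle_trans; [|exact HLN]. apply Rmult_le_compat_l; auto. }
  replace (u t x - K x) with ((u t x - u t (xk k)) + (u t (xk k) - K (xk k)) + (K (xk k) - K x)) by ring.
  eapply Rle_lt_trans. apply Rabs_triang.
  eapply Rle_lt_trans. apply Rplus_le_compat_r. apply Rabs_triang.
  lra.
Qed.

Definition gbase (g gq gp gqq gpp : R -> R -> R) (M : R) : Prop :=
  0 <= M /\
  (forall t p, Icl p -> is_derive (fun u => g u p) t (gq t p)) /\
  (forall t p, Icl p -> is_derive (fun u => gq u p) t (gqq t p)) /\
  (forall t p, Icl p -> is_derive_I (g t) p (gp t p)) /\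
  (forall t p, Icl p -> is_derive_I (gp t) p (gpp t p)) /\
  (forall t p, Icl p -> Rabs (gqq t p) <= M /\ Rabs (gpp t p) <= M /\ Rabs (gp t p) <= M).

Definition glim (g : R -> R -> R) (K : R -> R) : Prop :=
  forall p, Icl p -> forall eps, 0 < eps -> exists T, forall t, T <= t -> Rabs (g t p - K p) < eps.

Lemma Icl_between x y z : Icl x -> Icl y -> Rmin x y <= z <= Rmax x y -> Icl z.
Proof. unfold Icl, Rmin, Rmax; destruct (Rle_dec x y); intros; lra. Qed.

Lemma Icl_between' x y z : Icl x -> Icl y -> Rmin x y < z < Rmax x y -> -1 < z < 0.
Proof. unfold Icl, Rmin, Rmax; destruct (Rle_dec x y); intros; lra. Qed.

Lemma lip_contI f L : (forall x y, Icl x -> Icl y -> Rabs (f y - f x) <= L * Rabs (y - x)) -> contI f.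
Proof.
  intros H. apply contI_of_eps. intros x Hx eps He.
  set (L' := Rabs L + 1). assert (HL : 0 < L') by (unfold L'; generalize (Rabs_pos L); lra).
  exists (eps / L'). split. apply Rdiv_lt_0_compat; auto.
  intros y Hy Hyx. eapply Rle_lt_trans. apply H; auto.
  apply Rle_lt_trans with (L' * Rabs (y - x)).
  apply Rmult_le_compat_r. apply Rabs_pos. unfold L'. generalize (Rle_abs L). lra.
  apply Rlt_le_trans with (L' * (eps / L')). apply Rmult_lt_compat_l; auto.
  right; field; lra.
Qed.

Lemma g_lip_p g gq gp gqq gpp M t x y : gbase g gq gp gqq gpp M -> Icl x -> Icl y ->
  Rabs (g t y - g t x) <= M * Rabs (y - x).
Proof.
  intros [HM [Hq [Hqq [Hp [Hpp Hb]]]]] Hx Hy.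
  apply (mvt_I (g t) (gp t)); auto.
  - apply (derI_cont _ (gp t)). intros z Hz; auto.
  - intros z Hz. apply derI_interior. apply Hp. apply (Icl_between x y); auto; lra.
    apply (Icl_between' x y); auto.
  - intros z Hz. apply Hb. apply (Icl_between x y); auto.
Qed.

Lemma gp_lip_p g gq gp gqq gpp M t x y : gbase g gq gp gqq gpp M -> Icl x -> Icl y ->
  Rabs (gp t y - gp t x) <= M * Rabs (y - x).
Proof.
  intros [HM [Hq [Hqq [Hp [Hpp Hb]]]]] Hx Hy.
  apply (mvt_I (gp t) (gpp t)); auto.
  - apply (derI_cont _ (gpp t)). intros z Hz; auto.
  - intros z Hz. apply derI_interior. apply Hpp. apply (Icl_between x y); auto; lra.
    apply (Icl_between' x y); auto.
  - intros z Hz. apply Hb. apply (Icl_between x y); auto.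
Qed.

Lemma taylor_p g gq gp gqq gpp M t x y : gbase g gq gp gqq gpp M -> Icl x -> Icl y ->
  Rabs (g t y - g t x - (y - x) * gp t x) <= M * Rabs (y - x) * Rabs (y - x).
Proof.
  intros HB Hx Hy. generalize HB; intros [HM [Hq [Hqq [Hp [Hpp Hb]]]]].
  set (f := fun z => g t z - z * gp t x).
  replace (g t y - g t x - (y - x) * gp t x) with (f y - f x) by (unfold f; ring).
  apply (mvt_I _ (fun z => gp t z - gp t x)); auto.
  - apply contI_minus. apply (derI_cont _ (gp t)). intros z Hz; auto.
    apply contI_mult. apply (lip_contI _ 1). intros; lra. apply contI_const.
  - intros z Hz. apply (is_derive_minus (V:=R_NormedModule)).
    apply derI_interior. apply Hp. apply (Icl_between x y); auto; lra.
    apply (Icl_between' x y); auto.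
    auto_derive; auto; ring.
  - intros z Hz. eapply Rle_trans. apply (gp_lip_p g gq gp gqq gpp M t x z); auto.
    apply (Icl_between x y); auto.
    apply Rmult_le_compat_l; auto.
    revert Hz. unfold Rmin, Rmax; destruct (Rle_dec x y); intros;
    unfold Rabs; repeat destruct Rcase_abs; lra.
Qed.

Lemma Rabs_tri3 a b c : Rabs (a + b + c) <= Rabs a + Rabs b + Rabs c.
Proof. eapply Rle_trans. apply Rabs_triang. generalize (Rabs_triang a b). lra. Qed.

Lemma Rabs_tri4 a b c d : Rabs (a + b + c + d) <= Rabs a + Rabs b + Rabs c + Rabs d.
Proof. eapply Rle_trans. apply Rabs_triang. generalize (Rabs_tri3 a b c). lra. Qed.

Lemma taylor_q g gq gp gqq gpp M t s p : gbase g gq gp gqq gpp M -> Icl p ->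
  Rabs (g (t + s) p - g t p - s * gq t p) <= M * Rabs s * Rabs s.
Proof.
  intros HB Hp0. generalize HB; intros [HM [Hq [Hqq [Hp [Hpp Hb]]]]].
  set (f := fun u => g u p - u * gq t p).
  replace (g (t + s) p - g t p - s * gq t p) with (f (t + s) - f t) by (unfold f; ring).
  replace (M * Rabs s * Rabs s) with ((M * Rabs s) * Rabs ((t + s) - t))
    by (replace (t + s - t) with s by ring; ring).
  apply (mvt_R _ (fun u => gq u p - gq t p)).
  - intros z Hz. apply (is_derive_minus (V:=R_NormedModule)). apply Hq; auto.
    auto_derive; auto; ring.
  - intros z Hz. eapply Rle_trans.
    apply (mvt_R (fun u => gq u p) (fun u => gqq u p) M t z).
    + intros w Hw. apply Hqq; auto.
    + intros w Hw. apply Hb; auto.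
    + apply Rmult_le_compat_l; auto.
      revert Hz. unfold Rmin, Rmax; destruct (Rle_dec t (t+s)); intros;
      unfold Rabs; repeat destruct Rcase_abs; lra.
Qed.

Lemma K_lip g gq gp gqq gpp M K x y : gbase g gq gp gqq gpp M -> glim g K -> Icl x -> Icl y ->
  Rabs (K y - K x) <= M * Rabs (y - x).
Proof.
  intros HB HL Hx Hy. apply le_epsilon. intros e He.
  destruct (HL x Hx (e/2)) as [T1 H1]. lra.
  destruct (HL y Hy (e/2)) as [T2 H2]. lra.
  set (t := Rmax T1 T2).
  specialize (H1 t (Rmax_l _ _)). specialize (H2 t (Rmax_r _ _)).
  assert (H3 := g_lip_p g gq gp gqq gpp M t x y HB Hx Hy).
  replace (K y - K x) with (- (g t y - K y) + (g t y - g t x) + (g t x - K x)) by ring.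
  eapply Rle_trans. apply Rabs_tri3. rewrite Rabs_Ropp. lra.
Qed.

Lemma g_unif g gq gp gqq gpp M K : gbase g gq gp gqq gpp M -> glim g K ->
  forall eps, 0 < eps -> exists T, forall t, T <= t -> forall x, Icl x -> Rabs (g t x - K x) < eps.
Proof.
  intros HB HL. apply (unif_conv g K M).
  - apply HB.
  - intros t x y Hx Hy. apply (g_lip_p g gq gp gqq gpp M); auto.
  - intros x y Hx Hy. apply (K_lip g gq gp gqq gpp M); auto.
  - exact HL.
Qed.

Lemma gq_unif g gq gp gqq gpp M K : gbase g gq gp gqq gpp M -> glim g K ->
  forall eps, 0 < eps -> exists T, forall t, T <= t -> forall x, Icl x -> Rabs (gq t x) < eps.
Proof.
  intros HB HL eps He. assert (HM : 0 <= M) by apply HB.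
  set (s := eps / (2 * (M + 1))).
  assert (Hs : 0 < s) by (unfold s; apply Rdiv_lt_0_compat; lra).
  assert (HMs : M * s < eps / 2).
  { unfold s. apply Rmult_lt_reg_r with (2 * (M + 1)). lra.
    replace (M * (eps / (2 * (M + 1))) * (2 * (M + 1))) with (M * eps) by (field; lra).
    replace (eps / 2 * (2 * (M + 1))) with (M * eps + eps) by field. lra. }
  destruct (g_unif g gq gp gqq gpp M K HB HL (eps * s / 8)) as [T HT].
  { assert (0 < eps * s) by (apply Rmult_lt_0_compat; lra); lra. }
  exists T. intros t Ht x Hx.
  assert (H1 := HT t Ht x Hx). assert (H2 := HT (t + s) ltac:(lra) x Hx).
  assert (H3 := taylor_q g gq gp gqq gpp M t s x HB Hx).
  rewrite (Rabs_right s) in H3 by lra.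
  assert (E : gq t x = (- (g (t + s) x - g t x - s * gq t x) + (g (t + s) x - K x) + - (g t x - K x)) / s)
    by (field; lra).
  rewrite E. unfold Rdiv. rewrite Rabs_mult, (Rabs_right (/ s)).
  2: { left; apply Rinv_0_lt_compat; auto. }
  apply Rmult_lt_reg_r with s; auto. rewrite Rmult_assoc, Rinv_l, Rmult_1_r by lra.
  eapply Rle_lt_trans. apply Rabs_tri3. rewrite !Rabs_Ropp.
  assert (M * s * s < eps / 2 * s) by (apply Rmult_lt_compat_r; auto).
  nra.
Qed.

Definition pick (x s : R) : R := if Rlt_dec x (-1/2) then x + s else x - s.

Lemma pick_spec x s : Icl x -> 0 < s <= 1/4 ->
  -1 < pick x s < 0 /\ Rabs (pick x s - x) = s.
Proof.
  intros Hx Hs. unfold pick, Icl in *. destruct (Rlt_dec x (-1/2)).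
  - split. lra. replace (x + s - x) with s by ring. apply Rabs_right; lra.
  - split. lra. replace (x - s - x) with (-s) by ring. rewrite Rabs_Ropp. apply Rabs_right; lra.
Qed.

Definition aK (gp : R -> R -> R) (x : R) : R := real (Lim_seq (fun n => gp (INR n) x)).

Lemma gp_conv g gq gp gqq gpp M K x : gbase g gq gp gqq gpp M -> glim g K -> Icl x ->
  forall eps, 0 < eps -> exists T, forall t, T <= t -> Rabs (gp t x - aK gp x) < eps.
Proof.
  intros HB HL Hx. assert (HM : 0 <= M) by apply HB.
  destruct (cauchy_from_approx (fun t => gp t x)) as [l Hl].
  { intros eps He.
    set (s := Rmin (1/4) (eps / (2 * (M + 1)))).
    assert (Hs : 0 < s) by (unfold s; apply Rmin_pos; [lra| apply Rdiv_lt_0_compat; lra]).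
    assert (Hs4 : s <= 1/4) by apply Rmin_l.
    assert (HMs : M * s <= eps / 2).
    { apply Rle_trans with (M * (eps / (2 * (M + 1)))). apply Rmult_le_compat_l; auto. apply Rmin_r.
      apply Rmult_le_reg_r with (2 * (M + 1)). lra.
      replace (M * (eps / (2 * (M + 1))) * (2 * (M + 1))) with (M * eps) by (field; lra).
      replace (eps / 2 * (2 * (M + 1))) with (M * eps + eps) by field. lra. }
    set (y := pick x s). destruct (pick_spec x s Hx (conj Hs Hs4)) as [Hy Hys]. fold y in Hy, Hys.
    assert (Hy' : Icl y) by (unfold Icl; lra).
    assert (Hyx : y - x <> 0) by (intro E; rewrite E, Rabs_R0 in Hys; lra).
    exists ((K y - K x) / (y - x)).
    destruct (HL x Hx (eps * s / 4)) as [T1 H1]. { assert (0 < eps * s) by (apply Rmult_lt_0_compat; lra); lra. }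
    destruct (HL y Hy' (eps * s / 4)) as [T2 H2]. { assert (0 < eps * s) by (apply Rmult_lt_0_compat; lra); lra. }
    exists (Rmax T1 T2). intros t Ht.
    specialize (H1 t (Rle_trans _ _ _ (Rmax_l _ _) Ht)).
    specialize (H2 t (Rle_trans _ _ _ (Rmax_r _ _) Ht)).
    assert (H3 := taylor_p g gq gp gqq gpp M t x y HB Hx Hy'). rewrite Hys in H3.
    assert (E : gp t x - (K y - K x) / (y - x) =
      (- (g t y - g t x - (y - x) * gp t x) + (g t y - K y) + - (g t x - K x)) / (y - x))
      by (field; auto).
    rewrite E. unfold Rdiv. rewrite Rabs_mult, Rabs_inv, Hys.
    apply Rmult_le_reg_r with s; auto. rewrite Rmult_assoc, Rinv_l, Rmult_1_r by lra.
    eapply Rle_trans. apply Rabs_tri3. rewrite !Rabs_Ropp.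
    assert (M * s * s <= eps / 2 * s) by (apply Rmult_le_compat_r; lra).
    lra. }
  assert (Hseq : is_lim_seq (fun n => gp (INR n) x) l).
  { apply is_lim_seq_spec. intros eps. destruct (Hl eps (cond_pos eps)) as [T HT].
    destruct (nat_above T) as [N HN]. exists N. intros n Hn. apply HT, HN, Hn. }
  unfold aK. rewrite (is_lim_seq_unique _ _ Hseq). simpl. exact Hl.
Qed.

Lemma a_taylor g gq gp gqq gpp M K x y : gbase g gq gp gqq gpp M -> glim g K -> Icl x -> Icl y ->
  Rabs (K y - K x - (y - x) * aK gp x) <= M * Rabs (y - x) * Rabs (y - x).
Proof.
  intros HB HL Hx Hy. apply le_epsilon. intros e He.
  destruct (HL x Hx (e/4)) as [T1 H1]. lra.
  destruct (HL y Hy (e/4)) as [T2 H2]. lra.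
  destruct (gp_conv g gq gp gqq gpp M K x HB HL Hx (e/4)) as [T3 H3]. lra.
  set (t := Rmax T1 (Rmax T2 T3)).
  specialize (H1 t (Rmax_l _ _)).
  specialize (H2 t (Rle_trans _ _ _ (Rmax_l _ _) (Rmax_r _ _))).
  specialize (H3 t (Rle_trans _ _ _ (Rmax_r _ _) (Rmax_r _ _))).
  assert (H4 := taylor_p g gq gp gqq gpp M t x y HB Hx Hy).
  replace (K y - K x - (y - x) * aK gp x) with
    (- (g t y - K y) + (g t x - K x) + (g t y - g t x - (y - x) * gp t x) + (y - x) * (gp t x - aK gp x)) by ring.
  eapply Rle_trans. apply Rabs_tri4. rewrite Rabs_Ropp, Rabs_mult.
  assert (Hyx : Rabs (y - x) <= 1) by (unfold Icl in *; unfold Rabs; destruct Rcase_abs; lra).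
  assert (Rabs (y - x) * Rabs (gp t x - aK gp x) <= e / 4).
  { apply Rle_trans with (1 * (e/4)). apply Rmult_le_compat; auto using Rabs_pos; lra. lra. }
  lra.
Qed.

Lemma a_lip g gq gp gqq gpp M K x y : gbase g gq gp gqq gpp M -> glim g K -> Icl x -> Icl y ->
  Rabs (aK gp y - aK gp x) <= M * Rabs (y - x).
Proof.
  intros HB HL Hx Hy. apply le_epsilon. intros e He.
  destruct (gp_conv g gq gp gqq gpp M K x HB HL Hx (e/2)) as [T1 H1]. lra.
  destruct (gp_conv g gq gp gqq gpp M K y HB HL Hy (e/2)) as [T2 H2]. lra.
  set (t := Rmax T1 T2).
  specialize (H1 t (Rmax_l _ _)). specialize (H2 t (Rmax_r _ _)).
  assert (H3 := gp_lip_p g gq gp gqq gpp M t x y HB Hx Hy).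
  replace (aK gp y - aK gp x) with (- (gp t y - aK gp y) + (gp t y - gp t x) + (gp t x - aK gp x)) by ring.
  eapply Rle_trans. apply Rabs_tri3. rewrite Rabs_Ropp. lra.
Qed.

Lemma a_pos g gq gp gqq gpp M K delta x : gbase g gq gp gqq gpp M -> glim g K ->
  (forall t p, -1 < p < 0 -> delta <= gp t p) -> Icl x -> delta <= aK gp x.
Proof.
  intros HB HL Hd Hx. assert (HM : 0 <= M) by apply HB.
  assert (Hint : forall y, -1 < y < 0 -> delta <= aK gp y).
  { intros y Hy. apply le_epsilon. intros e He.
    destruct (gp_conv g gq gp gqq gpp M K y HB HL ltac:(unfold Icl; lra) e He) as [T HT].
    specialize (HT T (Rle_refl _)). specialize (Hd T y Hy).
    apply Rabs_def2 in HT. lra. }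
  apply le_epsilon. intros e He.
  set (s := Rmin (1/4) (e / (M + 1))).
  assert (Hs : 0 < s) by (unfold s; apply Rmin_pos; [lra| apply Rdiv_lt_0_compat; lra]).
  assert (Hs4 : s <= 1/4) by apply Rmin_l.
  assert (HMs : M * s <= e).
  { apply Rle_trans with (M * (e / (M + 1))). apply Rmult_le_compat_l; auto. apply Rmin_r.
    apply Rmult_le_reg_r with (M + 1). lra.
    replace (M * (e / (M + 1)) * (M + 1)) with (M * e) by (field; lra). nra. }
  destruct (pick_spec x s Hx (conj Hs Hs4)) as [Hy Hys].
  assert (H1 := Hint _ Hy).
  assert (H2 := a_lip g gq gp gqq gpp M K x (pick x s) HB HL Hx ltac:(unfold Icl; lra)).
  rewrite Hys in H2.
  assert (aK gp (pick x s) - aK gp x <= M * s) by (eapply Rle_trans; [apply Rle_abs| exact H2]).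
  lra.
Qed.

Lemma K_deriv g gq gp gqq gpp M K x : gbase g gq gp gqq gpp M -> glim g K -> -1 < x < 0 ->
  is_derive K x (aK gp x).
Proof.
  intros HB HL Hx. assert (HM : 0 <= M) by apply HB.
  apply is_derive_Reals. intros eps He.
  assert (Hd : 0 < Rmin (eps / (M + 1)) (Rmin (x + 1) (- x))) by
    (repeat apply Rmin_pos; try lra; apply Rdiv_lt_0_compat; lra).
  exists (mkposreal _ Hd). intros h Hh Hhd. simpl in Hhd.
  assert (Hh1 := Rlt_le_trans _ _ _ Hhd (Rmin_l _ _)).
  assert (Hh2 := Rlt_le_trans _ _ _ Hhd (Rmin_r _ _)).
  assert (Hh3 := Rlt_le_trans _ _ _ Hh2 (Rmin_l _ _)).
  assert (Hh4 := Rlt_le_trans _ _ _ Hh2 (Rmin_r _ _)).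
  assert (Hxh : Icl (x + h)) by (apply Rabs_def2 in Hh3; apply Rabs_def2 in Hh4; unfold Icl; lra).
  assert (H := a_taylor g gq gp gqq gpp M K x (x + h) HB HL ltac:(unfold Icl; lra) Hxh).
  replace (x + h - x) with h in H by ring.
  assert (Hap : 0 < Rabs h) by (apply Rabs_pos_lt; auto).
  replace ((K (x + h) - K x) / h - aK gp x) with ((K (x + h) - K x - h * aK gp x) / h) by (field; auto).
  unfold Rdiv. rewrite Rabs_mult, Rabs_inv.
  apply Rmult_lt_reg_r with (Rabs h); auto. rewrite Rmult_assoc, Rinv_l, Rmult_1_r by lra.
  eapply Rle_lt_trans. exact H.
  apply Rmult_lt_compat_r; auto.
  apply Rle_lt_trans with ((M + 1) * Rabs h). apply Rmult_le_compat_r; lra.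
  apply Rlt_le_trans with ((M + 1) * (eps / (M + 1))). apply Rmult_lt_compat_l; lra.
  right; field; lra.
Qed.

Lemma cont2d_snd f x y : continuity_2d_pt f x y -> continuity_pt (fun v => f x v) y.
Proof.
  intros H. apply continuity_pt_locally. intros eps.
  destruct (H eps) as [d Hd]. exists d. intros v Hv. apply Hd.
  rewrite Rminus_eq_0, Rabs_R0. apply cond_pos. exact Hv.
Qed.

Lemma cont2d_fst f x y : continuity_2d_pt f x y -> continuity_pt (fun u => f u y) x.
Proof.
  intros H. apply continuity_pt_locally. intros eps.
  destruct (H eps) as [d Hd]. exists d. intros u Hu. apply Hd. exact Hu.
  rewrite Rminus_eq_0, Rabs_R0. apply cond_pos.
Qed.

Lemma bdd_contI f : contI f -> exists B, forall x, Icl x -> Rabs (f x) <= B.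
Proof.
  intros H. destruct (continuity_ab_maj (fun x => Rabs (f (clamp x))) (-1) 0) as [m [Hm _]].
  lra. intros c _. apply (continuity_pt_comp (fun x => f (clamp x)) Rabs). apply H. apply Rcontinuity_abs.
  exists (Rabs (f (clamp m))). intros x Hx. specialize (Hm x Hx). simpl in Hm. rewrite clamp_id in Hm; auto.
Qed.

Lemma cont_zero_left D a b : continuity_pt D b -> a < b -> (forall x, a < x < b -> D x = 0) -> D b = 0.
Proof.
  intros Hc Hab HD. destruct (Req_dec (D b) 0) as [|Hne]; auto. exfalso.
  destruct (proj1 (continuity_pt_locally _ _) Hc (mkposreal _ (Rabs_pos_lt _ Hne))) as [d Hd].
  set (x := b - Rmin (d / 2) ((b - a) / 2)).
  assert (Hm1 : 0 < Rmin (d / 2) ((b - a) / 2)) by (apply Rmin_pos; [generalize (cond_pos d)|]; lra).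
  assert (Hm2 := Rmin_l (d/2) ((b-a)/2)). assert (Hm3 := Rmin_r (d/2) ((b-a)/2)).
  assert (Hx : a < x < b) by (unfold x; lra).
  specialize (Hd x). rewrite HD in Hd by auto. simpl in Hd.
  assert (Rabs (0 - D b) < Rabs (D b)). apply Hd.
  change (Rabs (x - b) < d). unfold x. replace (b - Rmin (d / 2) ((b - a) / 2) - b) with (- Rmin (d / 2) ((b - a) / 2)) by ring.
  rewrite Rabs_Ropp, Rabs_right by lra. generalize (cond_pos d); lra.
  rewrite Rminus_0_l, Rabs_Ropp in H. lra.
Qed.

Lemma seq_of_conv (f : R -> R) l (xi : nat -> R) :
  (forall eps, 0 < eps -> exists T, forall t, T <= t -> Rabs (f t - l) < eps) ->
  (forall n, INR n <= xi n) -> is_lim_seq (fun n => f (xi n)) l.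
Proof.
  intros Hf Hx. apply is_lim_seq_spec. intros eps.
  destruct (Hf eps (cond_pos eps)) as [T HT]. destruct (nat_above T) as [N HN].
  exists N. intros n Hn. apply HT. eapply Rle_trans. apply HN, Hn. apply Hx.
Qed.

Lemma lim_Aexpr (u v : nat -> R) (c b : R) : is_lim_seq u 0 -> is_lim_seq v b -> b <> 0 ->
  is_lim_seq (fun n => - (1 + u n ^ 2) / (2 * v n ^ 2) + c) (- / (2 * b ^ 2) + c).
Proof.
  intros Hu Hv Hb.
  replace (- / (2 * b ^ 2) + c) with (- (1 + 0 * 0) / (2 * (b * b)) + c) by (field; auto).
  apply is_lim_seq_plus'; [|apply is_lim_seq_const].
  apply (is_lim_seq_ext (fun n => - (1 + u n * u n) / (2 * (v n * v n)))).
  { intros n. simpl. rewrite !Rmult_1_r. reflexivity. }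
  apply is_lim_seq_div'.
  apply (is_lim_seq_ext (fun n => - 1 + - (u n * u n))). intros; ring.
  replace (- (1 + 0 * 0)) with (-1 + - (0 * 0)) by ring.
  apply is_lim_seq_plus'. apply is_lim_seq_const.
  apply (is_lim_seq_ext (fun n => (-1) * (u n * u n))). intros; ring.
  replace (- (0 * 0)) with (-1 * (0 * 0)) by ring.
  apply is_lim_seq_mult'. apply is_lim_seq_const. apply is_lim_seq_mult'; auto.
  apply is_lim_seq_mult'. apply is_lim_seq_const. apply is_lim_seq_mult'; auto.
  intros E. apply Hb. nra.
Qed.

Definition gextra (g gq gp gqq gpq : R -> R -> R) (rho rho1 H H1 : R -> R) (F delta : R) : Prop :=
  0 < delta /\ (forall t p, -1 < p < 0 -> delta <= gp t p) /\
  (forall t p, Icl p -> is_derive (fun u => gp u p) t (gpq t p)) /\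
  (forall t p, -1 < p < 0 -> continuity_2d_pt gq t p /\ continuity_2d_pt gp t p /\
      continuity_2d_pt gqq t p /\ continuity_2d_pt gpq t p) /\
  (forall t p, -1 < p < 0 -> exists A B,
       is_derive (fun p' => - (1 + (gq t p')^2) / (2 * (gp t p')^2) + / (2 * (H1 p')^2)) p A /\
       is_derive (fun u => gq u p / gp u p) t B /\
       A + B - / F^2 * rho1 p * (g t p - H p) = 0) /\
  (forall t, (1 + (gq t 0)^2) / (2 * (gp t 0)^2) - / (2 * (H1 0)^2) + / F^2 * rho 0 * (g t 0 - 1) = 0) /\
  contI rho /\ contI rho1 /\ contI H /\ contI H1 /\ (forall p, Icl p -> 0 < H1 p) /\ 0 < F.

Definition Bf (gq gp gqq gpq : R -> R -> R) (t p : R) : R :=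
  (gqq t p * gp t p - gq t p * gpq t p) / gp t p ^ 2.

Lemma Bf_deriv g gq gp gqq gpp gpq M rho rho1 H H1 F delta t p :
  gbase g gq gp gqq gpp M -> gextra g gq gp gqq gpq rho rho1 H H1 F delta -> -1 < p < 0 ->
  is_derive (fun u => gq u p / gp u p) t (Bf gq gp gqq gpq t p).
Proof.
  intros HB HE Hp. destruct HB as [HM [Hq [Hqq [Hpp' [Hpp Hb]]]]].
  destruct HE as [Hd [Hdp [Hpq _]]].
  apply (is_derive_div (fun u => gq u p) (fun u => gp u p)). apply Hqq; unfold Icl; lra. apply Hpq; unfold Icl; lra.
  specialize (Hdp t p Hp). lra.
Qed.

Lemma Bf_cont g gq gp gqq gpp gpq M rho rho1 H H1 F delta t p :
  gbase g gq gp gqq gpp M -> gextra g gq gp gqq gpq rho rho1 H H1 F delta -> -1 < p < 0 ->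
  continuity_2d_pt (Bf gq gp gqq gpq) t p.
Proof.
  intros HB HE Hp. destruct HE as [Hd [Hdp [Hpq [Hc _]]]].
  destruct (Hc t p Hp) as [C1 [C2 [C3 C4]]].
  apply continuity_2d_pt_ext with (fun u v => (gqq u v * gp u v - gq u v * gpq u v) * / (gp u v * gp u v)).
  { intros u v. unfold Bf, Rdiv. simpl. rewrite Rmult_1_r. reflexivity. }
  apply continuity_2d_pt_mult.
  apply continuity_2d_pt_minus; apply continuity_2d_pt_mult; auto.
  apply continuity_2d_pt_inv. apply continuity_2d_pt_mult; auto.
  specialize (Hdp t p Hp). nra.
Qed.

Lemma Q_cont g gq gp gqq gpp gpq M rho rho1 H H1 F delta t p :
  gbase g gq gp gqq gpp M -> gextra g gq gp gqq gpq rho rho1 H H1 F delta -> -1 < p < 0 ->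
  continuity_2d_pt (fun u v => gq u v / gp u v) t p.
Proof.
  intros HB HE Hp. destruct HE as [Hd [Hdp [Hpq [Hc _]]]].
  destruct (Hc t p Hp) as [C1 [C2 [C3 C4]]].
  apply continuity_2d_pt_mult; auto.
  apply continuity_2d_pt_inv; auto.
  specialize (Hdp t p Hp). lra.
Qed.

Lemma W_deriv g gq gp gqq gpp gpq M rho rho1 H H1 F delta p0 p1 t :
  gbase g gq gp gqq gpp M -> gextra g gq gp gqq gpq rho rho1 H H1 F delta ->
  -1 < p0 -> p0 < p1 -> p1 < 0 ->
  is_derive (fun t => RInt (fun p => gq t p / gp t p) p0 p1) t (RInt (Bf gq gp gqq gpq t) p0 p1).
Proof.
  intros HB HE H0 H01 H1'.
  assert (Hin : forall z, Rmin p0 p1 <= z <= Rmax p0 p1 -> -1 < z < 0).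
  { intros z. rewrite Rmin_left, Rmax_right by lra. lra. }
  assert (Hd := is_derive_RInt_param (fun u p => gq u p / gp u p) p0 p1 t).
  erewrite (RInt_ext _ (Bf gq gp gqq gpq t)) in Hd.
  apply Hd.
  - apply filter_forall. intros x0 t0 Ht0. eexists.
    apply (Bf_deriv g gq gp gqq gpp gpq M rho rho1 H H1 F delta); auto.
  - intros t0 Ht0. specialize (Hin t0 Ht0).
    apply continuity_2d_pt_ext_loc with (Bf gq gp gqq gpq).
    2: apply (Bf_cont g gq gp gqq gpp gpq M rho rho1 H H1 F delta); auto.
    assert (Hdl : 0 < Rmin (t0 + 1) (- t0)) by (apply Rmin_pos; lra).
    exists (mkposreal _ Hdl). intros u v _ Hv. simpl in Hv.
    apply Rabs_def2 in Hv. unfold Rmin in Hv. destruct (Rle_dec _ _) in Hv;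
    symmetry; apply is_derive_unique;
      apply (Bf_deriv g gq gp gqq gpp gpq M rho rho1 H H1 F delta); auto; lra.
  - apply filter_forall. intros y. apply (ex_RInt_continuous (V:=R_CompleteNormedModule)).
    intros z Hz. apply continuity_pt_filterlim.
    apply (cont2d_snd (fun u v => gq u v / gp u v)).
    apply (Q_cont g gq gp gqq gpp gpq M rho rho1 H H1 F delta); auto.
  - intros x Hx. rewrite Rmin_left, Rmax_right in Hx by lra. apply is_derive_unique.
    apply (Bf_deriv g gq gp gqq gpp gpq M rho rho1 H H1 F delta); auto; lra.
Qed.

Definition Aexpr (gq gp : R -> R -> R) (H1 : R -> R) (t p : R) : R :=
  - (1 + (gq t p)^2) / (2 * (gp t p)^2) + / (2 * (H1 p)^2).

Lemma A_deriv g gq gp gqq gpp gpq M rho rho1 H H1 F delta t p :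
  gbase g gq gp gqq gpp M -> gextra g gq gp gqq gpq rho rho1 H H1 F delta -> -1 < p < 0 ->
  is_derive (Aexpr gq gp H1 t) p (/ F^2 * rho1 p * (g t p - H p) - Bf gq gp gqq gpq t p).
Proof.
  intros HB HE Hp. generalize HE; intros [Hd [Hdp [Hpq [Hc [Heq _]]]]].
  destruct (Heq t p Hp) as [A [B [HA [HBd HAB]]]].
  assert (EB : B = Bf gq gp gqq gpq t p).
  { rewrite <- (is_derive_unique _ _ _ HBd). apply is_derive_unique.
    apply (Bf_deriv g gq gp gqq gpp gpq M rho rho1 H H1 F delta); auto. }
  replace (/ F^2 * rho1 p * (g t p - H p) - Bf gq gp gqq gpq t p) with A by lra.
  exact HA.
Qed.

Lemma FTC_p g gq gp gqq gpp gpq M rho rho1 H H1 F delta p0 p1 t :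
  gbase g gq gp gqq gpp M -> gextra g gq gp gqq gpq rho rho1 H H1 F delta ->
  -1 < p0 -> p0 < p1 -> p1 < 0 ->
  Aexpr gq gp H1 t p1 - Aexpr gq gp H1 t p0 =
  RInt (fun p => / F^2 * rho1 p * (g t p - H p)) p0 p1 - RInt (Bf gq gp gqq gpq t) p0 p1.
Proof.
  intros HB HE H0 H01 H1'.
  generalize HE; intros [Hd [Hdp [Hpq [Hc [Heq [Htop [Crho [Crho1 [CH [CH1 [HH1 HF]]]]]]]]]]].
  assert (Hin : forall z, Rmin p0 p1 <= z <= Rmax p0 p1 -> -1 < z < 0).
  { intros z. rewrite Rmin_left, Rmax_right by lra. lra. }
  assert (Cg : contI (g t)).
  { apply (derI_cont _ (gp t)). intros z Hz. apply HB; auto. }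
  assert (C1 : forall z, -1 < z < 0 -> continuity_pt (fun p => / F^2 * rho1 p * (g t p - H p)) z).
  { intros z Hz. apply continuity_pt_mult. apply continuity_pt_mult.
    apply continuity_pt_const. intros a b; reflexivity. apply contI_interior; auto.
    apply continuity_pt_minus; apply contI_interior; auto. }
  assert (C2 : forall z, -1 < z < 0 -> continuity_pt (Bf gq gp gqq gpq t) z).
  { intros z Hz. apply (cont2d_snd (Bf gq gp gqq gpq)).
    apply (Bf_cont g gq gp gqq gpp gpq M rho rho1 H H1 F delta); auto. }
  assert (HI := is_RInt_derive (Aexpr gq gp H1 t)
    (fun p => / F^2 * rho1 p * (g t p - H p) - Bf gq gp gqq gpq t p) p0 p1).
  assert (Ex1 : ex_RInt (fun p => / F^2 * rho1 p * (g t p - H p)) p0 p1).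
  { apply (ex_RInt_continuous (V:=R_CompleteNormedModule)). intros z Hz.
    apply continuity_pt_filterlim. auto. }
  assert (Ex2 : ex_RInt (Bf gq gp gqq gpq t) p0 p1).
  { apply (ex_RInt_continuous (V:=R_CompleteNormedModule)). intros z Hz.
    apply continuity_pt_filterlim. auto. }
  transitivity (RInt (fun p => / F^2 * rho1 p * (g t p - H p) - Bf gq gp gqq gpq t p) p0 p1).
  - symmetry. apply is_RInt_unique. apply HI.
    + intros x Hx. apply (A_deriv g gq gp gqq gpp gpq M rho rho1 H H1 F delta); auto.
    + intros x Hx. apply continuity_pt_filterlim. apply continuity_pt_minus; auto.
  - exact (RInt_minus (V:=R_CompleteNormedModule) _ _ p0 p1 Ex1 Ex2).
Qed.

Lemma W_small g gq gp gqq gpp gpq M rho rho1 H H1 F delta K p0 p1 :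
  gbase g gq gp gqq gpp M -> glim g K -> gextra g gq gp gqq gpq rho rho1 H H1 F delta ->
  -1 < p0 -> p0 < p1 -> p1 < 0 ->
  forall eps, 0 < eps -> exists T, forall t, T <= t -> Rabs (RInt (fun p => gq t p / gp t p) p0 p1) < eps.
Proof.
  intros HB HL HE H0 H01 H1' eps He.
  generalize HE; intros [Hd [Hdp _]].
  destruct (gq_unif g gq gp gqq gpp M K HB HL (eps * delta / 2)) as [T HT].
  { assert (0 < eps * delta) by (apply Rmult_lt_0_compat; lra). lra. }
  exists T. intros t Ht.
  eapply Rle_lt_trans. apply (abs_RInt_le_const _ p0 p1 (eps / 2)). lra.
  - apply (ex_RInt_continuous (V:=R_CompleteNormedModule)). intros z Hz.
    rewrite Rmin_left, Rmax_right in Hz by lra.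
    apply continuity_pt_filterlim. apply (cont2d_snd (fun u v => gq u v / gp u v)).
    apply (Q_cont g gq gp gqq gpp gpq M rho rho1 H H1 F delta); auto; lra.
  - intros z Hz. assert (Hz' : -1 < z < 0) by lra.
    specialize (HT t Ht z ltac:(unfold Icl; lra)). specialize (Hdp t z Hz').
    unfold Rdiv. rewrite Rabs_mult, Rabs_inv, (Rabs_right (gp t z)) by lra.
    apply Rmult_le_reg_r with (gp t z). lra.
    rewrite Rmult_assoc, Rinv_l, Rmult_1_r by lra.
    assert (eps / 2 * delta <= eps / 2 * gp t z) by (apply Rmult_le_compat_l; lra). lra.
  - nra.
Qed.

Lemma I_conv g gq gp gqq gpp gpq M rho rho1 H H1 F delta K p0 p1 :
  gbase g gq gp gqq gpp M -> glim g K -> gextra g gq gp gqq gpq rho rho1 H H1 F delta ->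
  -1 < p0 -> p0 < p1 -> p1 < 0 ->
  forall eps, 0 < eps -> exists T, forall t, T <= t ->
    Rabs (RInt (fun p => / F^2 * rho1 p * (g t p - H p)) p0 p1 -
          RInt (fun p => / F^2 * rho1 p * (K p - H p)) p0 p1) < eps.
Proof.
  intros HB HL HE H0 H01 H1' eps He.
  generalize HE; intros [Hd [Hdp [Hpq [Hc [Heq [Htop [Crho [Crho1 [CH [CH1 [HH1 HF]]]]]]]]]]].
  destruct (bdd_contI rho1 Crho1) as [Br HBr].
  assert (HBr0 : 0 <= Br) by (eapply Rle_trans; [apply Rabs_pos| apply (HBr (-1)); unfold Icl; lra]).
  set (C := / F^2 * Br).
  assert (HC : 0 <= C) by (unfold C; apply Rmult_le_pos; auto; left; apply Rinv_0_lt_compat; nra).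
  destruct (g_unif g gq gp gqq gpp M K HB HL (eps / (2 * (C + 1)))) as [T HT].
  { apply Rdiv_lt_0_compat; lra. }
  assert (CK : contI K).
  { apply (lip_contI K M). intros x y Hx Hy. apply (K_lip g gq gp gqq gpp M); auto. }
  assert (Cg : forall t, contI (g t)).
  { intros t. apply (derI_cont _ (gp t)). intros z Hz. apply HB; auto. }
  assert (Hex : forall f, contI f -> ex_RInt (fun p => / F^2 * rho1 p * (f p - H p)) p0 p1).
  { intros f Cf. apply exRInt_I; try lra. apply contI_mult. apply contI_mult. apply contI_const.
    auto. apply contI_minus; auto. }
  exists T. intros t Ht.
  assert (E : RInt (fun p => / F^2 * rho1 p * (g t p - H p)) p0 p1 -
          RInt (fun p => / F^2 * rho1 p * (K p - H p)) p0 p1 =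
          RInt (fun p => / F^2 * rho1 p * (g t p - K p)) p0 p1).
  { etransitivity. exact (eq_sym (RInt_minus (V:=R_CompleteNormedModule) _ _ p0 p1 (Hex _ (Cg t)) (Hex _ CK))).
    apply RInt_ext. intros x _. unfold minus, plus, opp; simpl. ring. }
  rewrite E.
  eapply Rle_lt_trans. apply (abs_RInt_le_const _ p0 p1 (C * (eps / (2 * (C + 1))))). lra.
  - apply exRInt_I; try lra. apply contI_mult. apply contI_mult. apply contI_const.
    auto. apply contI_minus; auto.
  - intros z Hz. assert (Hz' : Icl z) by (unfold Icl; lra).
    rewrite !Rabs_mult. unfold C.
    rewrite (Rabs_right (/ F^2)) by (left; apply Rinv_0_lt_compat; nra).
    rewrite !Rmult_assoc. apply Rmult_le_compat_l. left; apply Rinv_0_lt_compat; nra.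
    apply Rmult_le_compat; auto using Rabs_pos. left. apply HT; auto.
  - assert (C * (eps / (2 * (C + 1))) <= eps / 2).
    { apply Rmult_le_reg_r with (2 * (C + 1)). lra.
      replace (C * (eps / (2 * (C + 1))) * (2 * (C + 1))) with (C * eps) by (field; lra).
      nra. }
    assert (0 <= C * (eps / (2 * (C + 1)))).
    { apply Rmult_le_pos; auto. left; apply Rdiv_lt_0_compat; lra. }
    nra.
Qed.

Lemma ode_interior g gq gp gqq gpp gpq M rho rho1 H H1 F delta K p0 p1 :
  gbase g gq gp gqq gpp M -> glim g K -> gextra g gq gp gqq gpq rho rho1 H H1 F delta ->
  -1 < p0 -> p0 < p1 -> p1 < 0 ->
  (- / (2 * aK gp p1 ^ 2) + / (2 * H1 p1 ^ 2)) - (- / (2 * aK gp p0 ^ 2) + / (2 * H1 p0 ^ 2))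
   = RInt (fun p => / F^2 * rho1 p * (K p - H p)) p0 p1.
Proof.
  intros HB HL HE H0 H01 H1'.
  generalize HE; intros [Hd [Hdp _]].
  set (W := fun t => RInt (fun p => gq t p / gp t p) p0 p1).
  set (G := fun t => RInt (Bf gq gp gqq gpq t) p0 p1).
  assert (HW : forall t, is_derive W t (G t)).
  { intros t. apply (W_deriv g gq gp gqq gpp gpq M rho rho1 H H1 F delta); auto. }
  assert (Hmvt : forall n : nat, exists c, INR n <= c /\ W (INR n + 1) - W (INR n) = G c).
  { intros n. destruct (MVT_gen W (INR n) (INR n + 1) G) as [c [Hc Heq]].
    - intros x _. apply HW.
    - intros x _. apply continuity_pt_filterlim. apply (ex_derive_continuous (V:=R_NormedModule)).
      eexists; apply HW.
    - rewrite Rmin_left in Hc by lra. exists c. split. lra. rewrite Heq. ring. }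
  set (xi := fun n => proj1_sig (constructive_indefinite_description _ (Hmvt n))).
  assert (Hxi : forall n, INR n <= xi n /\ W (INR n + 1) - W (INR n) = G (xi n)).
  { intros n. unfold xi. destruct (constructive_indefinite_description _ (Hmvt n)); simpl; auto. }
  assert (HWs := W_small g gq gp gqq gpp gpq M rho rho1 H H1 F delta K p0 p1 HB HL HE H0 H01 H1').
  assert (LG : is_lim_seq (fun n => G (xi n)) 0).
  { apply (is_lim_seq_ext (fun n => W (INR n + 1) - W (INR n))).
    intros n; apply Hxi.
    replace 0 with (0 - 0) by ring. apply is_lim_seq_minus'.
    - apply (seq_of_conv W 0 (fun n => INR n + 1)).
      intros eps He. destruct (HWs eps He) as [T HT]. exists T. intros t Ht.
      rewrite Rminus_0_r. apply HT; auto.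
      intros n; lra.
    - apply (seq_of_conv W 0 (fun n => INR n)).
      intros eps He. destruct (HWs eps He) as [T HT]. exists T. intros t Ht.
      rewrite Rminus_0_r. apply HT; auto.
      intros n; lra. }
  assert (LI : is_lim_seq (fun n => RInt (fun p => / F^2 * rho1 p * (g (xi n) p - H p)) p0 p1)
                 (RInt (fun p => / F^2 * rho1 p * (K p - H p)) p0 p1)).
  { apply (seq_of_conv (fun t => RInt (fun p => / F^2 * rho1 p * (g t p - H p)) p0 p1)).
    apply (I_conv g gq gp gqq gpp gpq M rho rho1 H H1 F delta K p0 p1); auto.
    intros n; apply Hxi. }
  assert (LA : forall p, -1 < p < 0 -> is_lim_seq (fun n => Aexpr gq gp H1 (xi n) p)
                  (- / (2 * aK gp p ^ 2) + / (2 * H1 p ^ 2))).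
  { intros p Hp. unfold Aexpr. apply lim_Aexpr.
    - apply (seq_of_conv (fun t => gq t p) 0).
      intros eps He. destruct (gq_unif g gq gp gqq gpp M K HB HL eps He) as [T HT].
      exists T. intros t Ht. rewrite Rminus_0_r. apply HT; auto. unfold Icl; lra.
      intros n; apply Hxi.
    - apply (seq_of_conv (fun t => gp t p)).
      apply (gp_conv g gq gp gqq gpp M K); auto. unfold Icl; lra.
      intros n; apply Hxi.
    - assert (delta <= aK gp p) by (apply (a_pos g gq gp gqq gpp M K delta); auto; unfold Icl; lra).
      lra. }
  assert (L1 : is_lim_seq (fun n => Aexpr gq gp H1 (xi n) p1 - Aexpr gq gp H1 (xi n) p0)
     ((- / (2 * aK gp p1 ^ 2) + / (2 * H1 p1 ^ 2)) - (- / (2 * aK gp p0 ^ 2) + / (2 * H1 p0 ^ 2)))).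
  { apply is_lim_seq_minus'; apply LA; lra. }
  assert (L2 : is_lim_seq (fun n => Aexpr gq gp H1 (xi n) p1 - Aexpr gq gp H1 (xi n) p0)
     (RInt (fun p => / F^2 * rho1 p * (K p - H p)) p0 p1 - 0)).
  { apply (is_lim_seq_ext (fun n => RInt (fun p => / F^2 * rho1 p * (g (xi n) p - H p)) p0 p1 - G (xi n))).
    intros n. symmetry. apply (FTC_p g gq gp gqq gpp gpq M rho rho1 H H1 F delta); auto.
    apply is_lim_seq_minus'; auto. }
  apply is_lim_seq_unique in L1. apply is_lim_seq_unique in L2.
  rewrite L1 in L2. injection L2. intros E. etransitivity; [exact E| apply Rminus_0_r].
Qed.

Lemma is_lim_seq_opp' (u : nat -> R) (l : R) : is_lim_seq u l -> is_lim_seq (fun n => - u n) (- l).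
Proof. intros H. apply (proj1 (is_lim_seq_opp u l)) in H. exact H. Qed.

Lemma ode_top g gq gp gqq gpp gpq M rho rho1 H H1 F delta K :
  gbase g gq gp gqq gpp M -> glim g K -> gextra g gq gp gqq gpq rho rho1 H H1 F delta ->
  / (2 * aK gp 0 ^ 2) - / (2 * H1 0 ^ 2) = - (/ F^2 * rho 0 * (K 0 - 1)).
Proof.
  intros HB HL HE.
  generalize HE; intros [Hd [Hdp [Hpq [Hc [Heq [Htop _]]]]]].
  assert (HI0 : Icl 0) by (unfold Icl; lra).
  assert (L : is_lim_seq (fun n => - Aexpr gq gp H1 (INR n) 0 + / F^2 * rho 0 * (g (INR n) 0 - 1))
     (- (- / (2 * aK gp 0 ^ 2) + / (2 * H1 0 ^ 2)) + / F^2 * rho 0 * (K 0 - 1))).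
  { apply is_lim_seq_plus'.
    - apply is_lim_seq_opp'. unfold Aexpr. apply lim_Aexpr.
      + apply (seq_of_conv (fun t => gq t 0) 0).
        intros eps He. destruct (gq_unif g gq gp gqq gpp M K HB HL eps He) as [T HT].
        exists T. intros t Ht. rewrite Rminus_0_r. apply HT; auto.
        intros n; lra.
      + apply (seq_of_conv (fun t => gp t 0)).
        apply (gp_conv g gq gp gqq gpp M K); auto.
        intros n; lra.
      + assert (delta <= aK gp 0) by (apply (a_pos g gq gp gqq gpp M K delta); auto). lra.
    - apply is_lim_seq_mult'. apply is_lim_seq_const.
      apply is_lim_seq_minus'. 2: apply is_lim_seq_const.
      apply (seq_of_conv (fun t => g t 0)). apply HL; auto. intros n; lra. }
  apply (is_lim_seq_ext _ (fun _ => 0)) in L.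
  2: { intros n. etransitivity; [|apply (Htop (INR n))]. unfold Aexpr, Rdiv. ring. }
  apply is_lim_seq_unique in L. rewrite Lim_seq_const in L. injection L. intros E.
  revert E. simpl. intros E. lra.
Qed.

Lemma contI_invsq f : contI f -> (forall x, Icl x -> f x <> 0) -> contI (fun x => / (2 * f x ^ 2)).
Proof.
  intros Cf Hn. apply contI_inv.
  - apply contI_ext with (fun x => 2 * (f x * f x)). intros x _. simpl; ring.
    apply contI_mult. apply contI_const. apply contI_mult; auto.
  - intros x Hx. specialize (Hn x Hx). apply Rmult_integral_contrapositive. split. lra.
    apply pow_nonzero; auto.
Qed.

Lemma contRInt_clamp f a b : contI f -> continuity_pt (fun x => RInt (fun y => f (clamp y)) a x) b.
Proof.
  intros Cf. apply continuity_pt_filterlim.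
  apply (ex_derive_continuous (V:=R_NormedModule)). eexists.
  apply (is_derive_RInt (fun y => f (clamp y)) (fun x => RInt (fun y => f (clamp y)) a x) a b).
  - apply filter_forall. intros x. apply (RInt_correct (V:=R_CompleteNormedModule)).
    apply (ex_RInt_continuous (V:=R_CompleteNormedModule)). intros z _.
    apply continuity_pt_filterlim. apply Cf.
  - apply continuity_pt_filterlim. apply Cf.
Qed.

Lemma ode_full g gq gp gqq gpp gpq M rho rho1 H H1 F delta K p0 :
  gbase g gq gp gqq gpp M -> glim g K -> gextra g gq gp gqq gpq rho rho1 H H1 F delta ->
  -1 < p0 < 0 ->
  (- / (2 * aK gp 0 ^ 2) + / (2 * H1 0 ^ 2)) - (- / (2 * aK gp p0 ^ 2) + / (2 * H1 p0 ^ 2))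
   = RInt (fun p => / F^2 * rho1 p * (K p - H p)) p0 0.
Proof.
  intros HB HL HE Hp0.
  generalize HE; intros [Hd [Hdp [Hpq [Hc [Heq [Htop [Crho [Crho1 [CH [CH1 [HH1 HF]]]]]]]]]]].
  set (f := fun p => / F^2 * rho1 p * (K p - H p)).
  set (Psi := fun p => - / (2 * aK gp p ^ 2) + / (2 * H1 p ^ 2)).
  assert (Ca : contI (aK gp)).
  { apply (lip_contI _ M). intros x y Hx Hy. apply (a_lip g gq gp gqq gpp M K); auto. }
  assert (CK : contI K).
  { apply (lip_contI K M). intros x y Hx Hy. apply (K_lip g gq gp gqq gpp M); auto. }
  assert (CPsi : contI Psi).
  { apply contI_plus. apply contI_opp. apply contI_invsq; auto.
    intros x Hx. assert (delta <= aK gp x) by (apply (a_pos g gq gp gqq gpp M K delta); auto). lra.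
    apply contI_invsq; auto. intros x Hx. specialize (HH1 x Hx). lra. }
  assert (Cf : contI f).
  { unfold f. apply contI_mult. apply contI_mult. apply contI_const. auto. apply contI_minus; auto. }
  set (D := fun x => Psi (clamp x) - Psi p0 - RInt (fun y => f (clamp y)) p0 x).
  assert (HD : D 0 = 0).
  { apply (cont_zero_left D p0 0).
    - unfold D. apply continuity_pt_minus. apply continuity_pt_minus. apply CPsi.
      apply continuity_pt_const. intros a b; reflexivity.
      apply contRInt_clamp; auto.
    - lra.
    - intros x Hx. unfold D. rewrite clamp_id by (unfold Icl; lra).
      rewrite (RInt_ext (fun y => f (clamp y)) f).
      + unfold Psi, f. rewrite (ode_interior g gq gp gqq gpp gpq M rho rho1 H H1 F delta K p0 x); auto; try lra.
      + intros z Hz. rewrite Rmin_left, Rmax_right in Hz by lra. rewrite clamp_id; auto.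
        unfold Icl; lra. }
  unfold D in HD. rewrite clamp_id in HD by (unfold Icl; lra).
  rewrite (RInt_ext (fun y => f (clamp y)) f) in HD.
  - unfold Psi in HD. lra.
  - intros z Hz. rewrite Rmin_left, Rmax_right in Hz by lra. rewrite clamp_id; auto.
    unfold Icl; lra.
Qed.

Lemma dmult (f g : R -> R) x df dg : is_derive f x df -> is_derive g x dg ->
  is_derive (fun y => f y * g y) x (df * g x + f x * dg).
Proof. intros Hf Hg. apply (is_derive_mult f g); auto. intros; apply Rmult_comm. Qed.
Lemma dplus (f g : R -> R) x df dg : is_derive f x df -> is_derive g x dg ->
  is_derive (fun y => f y + g y) x (df + dg).
Proof. intros Hf Hg. apply (is_derive_plus f g); auto. Qed.
Lemma dminus (f g : R -> R) x df dg : is_derive f x df -> is_derive g x dg ->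
  is_derive (fun y => f y - g y) x (df - dg).
Proof. intros Hf Hg. apply (is_derive_minus f g); auto. Qed.
Lemma dscal (f : R -> R) k x df : is_derive f x df -> is_derive (fun y => k * f y) x (k * df).
Proof. intros Hf. apply is_derive_scal; auto. Qed.

Lemma FTC_I (P dP : R -> R) : contI P -> contI dP -> (forall x, -1 < x < 0 -> is_derive P x (dP x)) ->
  RInt dP (-1) 0 = P 0 - P (-1).
Proof.
  intros CP CdP HdP.
  set (E := fun x => RInt (fun y => dP (clamp y)) (-1) x - P (clamp x)).
  destruct (MVT_gen E (-1) 0 (fun _ => 0)) as [c [_ Hc]].
  - intros x Hx. rewrite Rmin_left, Rmax_right in Hx by lra. unfold E.
    replace 0 with (dP (clamp x) - dP x) by (rewrite clamp_id; [ring| unfold Icl; lra]).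
    apply dminus.
    + apply (is_derive_RInt (fun y => dP (clamp y)) (fun x => RInt (fun y => dP (clamp y)) (-1) x) (-1) x).
      * apply filter_forall. intros z. apply (RInt_correct (V:=R_CompleteNormedModule)).
        apply (ex_RInt_continuous (V:=R_CompleteNormedModule)). intros u _.
        apply continuity_pt_filterlim. apply CdP.
      * apply continuity_pt_filterlim. apply CdP.
    + apply is_derive_ext_loc with P. 
      * generalize (locally_clamp P x Hx). apply filter_imp. intros y Hy; auto.
      * apply HdP; auto.
  - intros x _. unfold E. apply continuity_pt_minus. apply contRInt_clamp; auto. apply CP.
  - unfold E in Hc. rewrite (RInt_point (V:=R_CompleteNormedModule)) in Hc.
    rewrite !clamp_id in Hc by (unfold Icl; lra).
    rewrite (RInt_ext (fun y => dP (clamp y)) dP) in Hc.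
    + change (zero : R) with 0 in Hc. lra.
    + intros x Hx. rewrite Rmin_left, Rmax_right in Hx by lra. rewrite clamp_id; auto. unfold Icl; lra.
Qed.

Lemma cont_zero_right D a b : continuity_pt D a -> a < b -> (forall x, a < x < b -> D x = 0) -> D a = 0.
Proof.
  intros Hc Hab HD.
  assert (Hz : (fun x => D (- x)) (- a) = 0).
  { apply (cont_zero_left (fun x => D (- x)) (- b) (- a)).
    - apply (continuity_pt_comp Ropp D). apply continuity_pt_opp, continuity_pt_id.
      rewrite Ropp_involutive; auto.
    - lra.
    - intros x Hx. apply HD; lra. }
  simpl in Hz. rewrite Ropp_involutive in Hz. exact Hz.
Qed.

Lemma pos_int_zero c : contI c -> (forall x, -1 < x < 0 -> 0 <= c x) -> RInt c (-1) 0 = 0 ->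
  forall x, -1 < x < 0 -> c x = 0.
Proof.
  intros Cc Hpos Hint x0 Hx0.
  destruct (Req_dec (c x0) 0) as [|Hne]; auto. exfalso.
  assert (Hp : 0 < c x0) by (specialize (Hpos x0 Hx0); lra).
  assert (Hp2 : 0 < c x0 / 2) by lra.
  destruct (proj1 (continuity_pt_locally _ _) (contI_interior c x0 Cc Hx0) (mkposreal _ Hp2)) as [d Hd].
  set (r := Rmin (d / 2) (Rmin ((x0 + 1) / 2) (- x0 / 2))).
  assert (Hr : 0 < r) by (unfold r; repeat apply Rmin_pos; generalize (cond_pos d); lra).
  assert (Hr1 := Rmin_l (d/2) (Rmin ((x0 + 1) / 2) (- x0 / 2))).
  assert (Hr2 := Rmin_r (d/2) (Rmin ((x0 + 1) / 2) (- x0 / 2))).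
  assert (Hr3 := Rmin_l ((x0 + 1) / 2) (- x0 / 2)).
  assert (Hr4 := Rmin_r ((x0 + 1) / 2) (- x0 / 2)). fold r in Hr1, Hr2.
  set (l := x0 - r). set (u := x0 + r).
  assert (Hl : -1 < l) by (unfold l; lra). assert (Hu : u < 0) by (unfold u; lra).
  assert (Hlu : l < u) by (unfold l, u; lra).
  assert (E1 : ex_RInt c (-1) l) by (apply exRInt_I; auto; unfold l; lra).
  assert (E2 : ex_RInt c l u) by (apply exRInt_I; auto; unfold l, u; lra).
  assert (E3 : ex_RInt c u 0) by (apply exRInt_I; auto; unfold u; lra).
  assert (I1 : 0 <= RInt c (-1) l).
  { apply RInt_ge_0; auto; try lra. intros x Hx. apply Hpos. lra. }
  assert (I3 : 0 <= RInt c u 0).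
  { apply RInt_ge_0; auto; try lra. intros x Hx. apply Hpos. lra. }
  assert (I2 : 0 < RInt c l u).
  { apply RInt_gt_0. lra.
    - intros x Hx. specialize (Hd x). simpl in Hd.
      assert (Rabs (c x - c x0) < c x0 / 2). apply Hd.
      change (Rabs (x - x0) < d). apply Rabs_def1; unfold l, u in Hx; generalize (cond_pos d); lra.
      apply Rabs_def2 in H. lra.
    - intros x Hx. apply continuity_pt_filterlim. apply contI_interior; auto. lra. }
  rewrite <- (RInt_Chasles (V:=R_CompleteNormedModule) c (-1) l 0) in Hint; auto.
  rewrite <- (RInt_Chasles (V:=R_CompleteNormedModule) c l u 0) in Hint; auto.
  change (RInt c (-1) l + (RInt c l u + RInt c u 0) = 0) in Hint. lra.
  apply (ex_RInt_Chasles (V:=R_CompleteNormedModule) c l u 0); auto.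
Qed.

Definition Rf (rho H1 : R -> R) (p : R) : R := RInt (fun t => rho t * H1 t) 0 p.

Lemma contI_of_cont g : (forall x, continuity_pt g x) -> contI g.
Proof.
  intros Hg x. apply (continuity_pt_comp clamp g).
  - apply continuity_pt_locally. intros eps. exists eps. intros y Hy.
    eapply Rle_lt_trans. apply clamp_lip. exact Hy.
  - apply Hg.
Qed.

Lemma Rf_eq rho H1 p : contI rho -> contI H1 -> Icl p ->
  Rf rho H1 p = RInt (fun t => rho (clamp t) * H1 (clamp t)) 0 p.
Proof.
  intros C1 C2 Hp. unfold Rf. apply RInt_ext. intros x Hx.
  unfold Icl in Hp. revert Hx; unfold Rmin, Rmax; destruct (Rle_dec 0 p); intros;
  rewrite clamp_id; auto; unfold Icl; lra.
Qed.

Lemma Rf_contI rho H1 : contI rho -> contI H1 -> contI (Rf rho H1).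
Proof.
  intros C1 C2. apply contI_ext with (fun p => RInt (fun t => rho (clamp t) * H1 (clamp t)) 0 p).
  { intros x Hx. symmetry. apply Rf_eq; auto. }
  apply contI_of_cont. intros x.
  apply (contRInt_clamp (fun t => rho t * H1 t)). apply contI_mult; auto.
Qed.

Lemma Rf_deriv rho H1 x : contI rho -> contI H1 -> -1 < x < 0 ->
  is_derive (Rf rho H1) x (rho x * H1 x).
Proof.
  intros C1 C2 Hx.
  apply is_derive_ext_loc with (fun p => RInt (fun t => rho (clamp t) * H1 (clamp t)) 0 p).
  { generalize (locally_interior x Hx). apply filter_imp. intros y Hy. symmetry. apply Rf_eq; auto. }
  replace (rho x * H1 x) with (rho (clamp x) * H1 (clamp x)) by (rewrite clamp_id; auto; unfold Icl; lra).
  apply (is_derive_RInt (fun t => rho (clamp t) * H1 (clamp t)) (fun p => RInt (fun t => rho (clamp t) * H1 (clamp t)) 0 p) 0).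
  - apply filter_forall. intros z. apply (RInt_correct (V:=R_CompleteNormedModule)).
    apply (ex_RInt_continuous (V:=R_CompleteNormedModule)). intros u _.
    apply continuity_pt_filterlim. apply (contI_mult rho H1); auto.
  - apply continuity_pt_filterlim. apply (contI_mult rho H1); auto.
Qed.

Lemma Rf_0 rho H1 : Rf rho H1 0 = 0.
Proof. unfold Rf. apply (RInt_point (V:=R_CompleteNormedModule)). Qed.

Lemma Phi_deriv (Phi f : R -> R) x : contI f ->
  (forall p, -1 < p < 0 -> Phi p = Phi 0 + RInt f p 0) -> -1 < x < 0 ->
  is_derive Phi x (- f x).
Proof.
  intros Cf HP Hx.
  apply is_derive_ext_loc with (fun p => Phi 0 + RInt (fun t => f (clamp t)) p 0).
  { generalize (locally_interior x Hx). intros L.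
    assert (Hd : 0 < Rmin (x + 1) (- x)) by (apply Rmin_pos; lra).
    exists (mkposreal _ Hd). intros y Hy.
    assert (Hy' : Rabs (y - x) < Rmin (x+1) (-x)) by exact Hy.
    apply Rabs_def2 in Hy'. unfold Rmin in Hy'. destruct (Rle_dec _ _) in Hy';
    (rewrite (HP y); [| lra]; f_equal; apply RInt_ext; intros z Hz;
     rewrite Rmin_left, Rmax_right in Hz by lra; rewrite clamp_id; auto; unfold Icl; lra). }
  replace (- f x) with (0 + opp (f (clamp x))).
  2: { rewrite clamp_id by (unfold Icl; lra). unfold opp; simpl; ring. }
  apply dplus. apply is_derive_Reals, derivable_pt_lim_const.
  apply (is_derive_RInt' (fun t => f (clamp t)) (fun p => RInt (fun t => f (clamp t)) p 0) x 0).
  - apply filter_forall. intros z. apply (RInt_correct (V:=R_CompleteNormedModule)).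
    apply (ex_RInt_continuous (V:=R_CompleteNormedModule)). intros u _.
    apply continuity_pt_filterlim. apply Cf.
  - apply continuity_pt_filterlim. apply Cf.
Qed.

Lemma RInt_le_0 f a b : a <= b -> ex_RInt f a b -> (forall x, a < x < b -> f x <= 0) -> RInt f a b <= 0.
Proof.
  intros Hab Hex Hf.
  assert (H := RInt_ge_0 (fun x => opp (f x)) a b Hab).
  rewrite (RInt_opp (V:=R_CompleteNormedModule)) in H; auto.
  assert (0 <= opp (RInt f a b)). apply H.
  apply (ex_RInt_opp (V:=R_NormedModule)); auto.
  intros x Hx. specialize (Hf x Hx). unfold opp; simpl; lra.
  unfold opp in H0; simpl in H0. lra.
Qed.

Lemma phi_sign a b : 0 < a -> 0 < b -> / (2 * a ^ 2) - / (2 * b ^ 2) <= 0 -> b <= a.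
Proof.
  intros Ha Hb H. destruct (Rle_dec b a) as [|Hn]; auto. exfalso.
  assert (a ^ 2 < b ^ 2) by (simpl; nra).
  assert (/ (2 * b ^ 2) < / (2 * a ^ 2)).
  { apply Rinv_lt_contravar. assert (0 < a ^ 2) by (apply pow_lt; auto).
    assert (0 < b ^ 2) by (apply pow_lt; auto). nra. lra. }
  lra.
Qed.

Lemma phi_sign' a b : 0 < a -> 0 < b -> 0 <= / (2 * a ^ 2) - / (2 * b ^ 2) -> a <= b.
Proof.
  intros Ha Hb H. apply (phi_sign b a); auto. lra.
Qed.

Lemma ff_core (K a H H1 rho rho1 : R -> R) (F delta : R) :
  0 < F -> 0 < delta ->
  contI a -> (forall x, Icl x -> delta <= a x) -> (forall x, -1 < x < 0 -> is_derive K x (a x)) ->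
  contI K -> K (-1) = 0 ->
  contI H -> H (-1) = 0 -> H 0 = 1 -> (forall x, -1 < x < 0 -> is_derive H x (H1 x)) ->
  contI H1 -> (forall x, Icl x -> 0 < H1 x) ->
  contI rho -> (forall x, Icl x -> 0 < rho x) -> (forall x, -1 < x < 0 -> is_derive rho x (rho1 x)) ->
  contI rho1 -> (forall x, Icl x -> rho1 x <= 0) ->
  / (2 * a 0 ^ 2) - / (2 * H1 0 ^ 2) = - (/ F^2 * rho 0 * (K 0 - 1)) ->
  (forall p0, -1 < p0 < 0 -> / (2 * a p0 ^ 2) - / (2 * H1 p0 ^ 2) =
     (/ (2 * a 0 ^ 2) - / (2 * H1 0 ^ 2)) + RInt (fun p => / F^2 * rho1 p * (K p - H p)) p0 0) ->
  flow_force rho H H1 F K = flow_force rho H H1 F H ->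
  ((forall p, Icl p -> H p <= K p) \/ (forall p, Icl p -> K p <= H p)) ->
  forall p, Icl p -> K p = H p.
Proof.
  intros HF Hd Ca Hapos HKd CK HK1 CH HHm1 HH0 HHd CH1 HH1pos Crho Hrhopos Hrhod Crho1 Hrho1neg
    Htop Hode Hff Hord.
  assert (Ha0 : forall x, Icl x -> a x <> 0) by (intros x Hx; specialize (Hapos x Hx); lra).
  assert (Hb0 : forall x, Icl x -> H1 x <> 0) by (intros x Hx; specialize (HH1pos x Hx); lra).
  assert (HF0 : F <> 0) by lra.
  set (w := fun p => K p - H p).
  set (f := fun p => / F^2 * rho1 p * (K p - H p)).
  set (Phi := fun p => / (2 * a p ^ 2) - / (2 * H1 p ^ 2)).
  assert (Hode' : forall p, -1 < p < 0 -> Phi p = Phi 0 + RInt f p 0) by (intros; apply Hode; auto).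
  assert (Cf : contI f).
  { unfold f. apply contI_mult. apply contI_mult. apply contI_const. auto. apply contI_minus; auto. }
  assert (CPhi : contI Phi).
  { unfold Phi. apply contI_minus; apply contI_invsq; auto. }
  assert (HPhid : forall x, -1 < x < 0 -> is_derive Phi x (- f x)).
  { intros x Hx. apply Phi_deriv; auto. }
  assert (Cw : contI w) by (unfold w; apply contI_minus; auto).
  assert (Hwd : forall x, -1 < x < 0 -> is_derive w x (a x - H1 x)).
  { intros x Hx. unfold w. apply (dminus K H); auto. }
  set (Rr := Rf rho H1).
  assert (CR : contI Rr) by (apply Rf_contI; auto).
  assert (HRd : forall x, -1 < x < 0 -> is_derive Rr x (rho x * H1 x)) by (intros; apply Rf_deriv; auto).
  set (P := fun p => - / F^2 * (Rr p * w p) - / (2 * F^2) * (rho p * (w p * w p)) - / 2 * (Phi p * w p)).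
  set (dP := fun p => - / F^2 * (rho p * H1 p * w p + Rr p * (a p - H1 p))
     - / (2 * F^2) * (rho1 p * (w p * w p) + rho p * ((a p - H1 p) * w p + w p * (a p - H1 p)))
     - / 2 * ((- f p) * w p + Phi p * (a p - H1 p))).
  assert (HPd : forall x, -1 < x < 0 -> is_derive P x (dP x)).
  { intros x Hx. unfold P, dP.
    apply (dminus (fun p => - / F^2 * (Rr p * w p) - / (2 * F^2) * (rho p * (w p * w p)))
                  (fun p => / 2 * (Phi p * w p))).
    apply (dminus (fun p => - / F^2 * (Rr p * w p)) (fun p => / (2 * F^2) * (rho p * (w p * w p)))).
    - apply (dscal (fun p => Rr p * w p)). apply (dmult Rr w); auto.
    - apply (dscal (fun p => rho p * (w p * w p))). apply (dmult rho (fun p => w p * w p)); auto.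
      apply (dmult w w); auto.
    - apply (dscal (fun p => Phi p * w p)). apply (dmult Phi w); auto. }
  assert (CP : contI P).
  { unfold P. repeat first [apply contI_minus | apply contI_mult | apply contI_const | assumption
     | (apply contI_invsq; assumption)]. }
  assert (CdP : contI dP).
  { unfold dP. repeat first [apply contI_minus | apply contI_plus | apply contI_mult | apply contI_opp
       | apply contI_const | assumption | (apply contI_invsq; assumption)]. }
  assert (HP0 : P 0 = 0).
  { unfold P. unfold Rr. rewrite Rf_0. unfold Phi at 1. rewrite Htop. unfold w. rewrite HH0. field. auto. }
  assert (HPm1 : P (-1) = 0).
  { unfold P, w. rewrite HK1, HHm1. ring. }
  assert (HdPint : RInt dP (-1) 0 = 0).
  { rewrite (FTC_I P dP CP CdP HPd), HP0, HPm1. lra. }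
  set (c := fun p => (a p - H1 p) ^ 3 / (4 * a p ^ 2 * H1 p ^ 2)).
  assert (Cc : contI c).
  { unfold c. apply contI_mult.
    - apply contI_ext with (fun p => (a p - H1 p) * ((a p - H1 p) * (a p - H1 p))).
      intros x _; simpl; ring.
      repeat first [apply contI_minus | apply contI_mult | assumption].
    - apply contI_inv.
      apply contI_ext with (fun p => 4 * (a p * a p) * (H1 p * H1 p)). intros x _; simpl; ring.
      repeat first [apply contI_mult | apply contI_const | assumption].
      intros x Hx. assert (0 < a x) by (specialize (Hapos x Hx); lra).
      assert (0 < H1 x) by auto.
      assert (0 < a x ^ 2) by (apply pow_lt; auto). assert (0 < H1 x ^ 2) by (apply pow_lt; auto).
      apply Rgt_not_eq. apply Rmult_lt_0_compat; [apply Rmult_lt_0_compat; lra|lra]. }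
  set (IK := fun p => (/ (2 * a p ^ 2) + / (2 * H1 p ^ 2) - / F^2 * rho p * (K p - H p) - / F^2 * Rr p) * a p).
  set (IH := fun p => (/ (2 * H1 p ^ 2) + / (2 * H1 p ^ 2) - / F^2 * rho p * (H p - H p) - / F^2 * Rr p) * H1 p).
  assert (EK : flow_force rho H H1 F K = RInt IK (-1) 0).
  { unfold flow_force. apply RInt_ext. intros x Hx. rewrite Rmin_left, Rmax_right in Hx by lra.
    rewrite (is_derive_unique K x (a x)) by auto. unfold IK, Rr, Rf. reflexivity. }
  assert (EH : flow_force rho H H1 F H = RInt IH (-1) 0).
  { unfold flow_force. apply RInt_ext. intros x Hx. rewrite Rmin_left, Rmax_right in Hx by lra.
    rewrite (is_derive_unique H x (H1 x)) by auto. unfold IH, Rr, Rf. reflexivity. }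
  assert (CIK : contI IK).
  { unfold IK. repeat first [apply contI_minus | apply contI_plus | apply contI_mult | apply contI_const
       | assumption | (apply contI_invsq; assumption)]. }
  assert (CIH : contI IH).
  { unfold IH. repeat first [apply contI_minus | apply contI_plus | apply contI_mult | apply contI_const
       | assumption | (apply contI_invsq; assumption)]. }
  assert (Hid : forall p, Icl p -> IK p - IH p = c p + dP p).
  { intros p Hp. specialize (Ha0 p Hp). specialize (Hb0 p Hp).
    unfold IK, IH, c, dP, Phi, f, w. field. auto. }
  assert (Hc0 : RInt c (-1) 0 = 0).
  { assert (E1 : RInt (fun p => IK p - IH p) (-1) 0 = 0).
    { etransitivity. exact (RInt_minus (V:=R_CompleteNormedModule) IK IH (-1) 0
          (exRInt_I IK (-1) 0 CIK ltac:(lra) ltac:(lra) ltac:(lra))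
          (exRInt_I IH (-1) 0 CIH ltac:(lra) ltac:(lra) ltac:(lra))).
      rewrite <- EK, <- EH, Hff. unfold minus, plus, opp; simpl. ring. }
    rewrite (RInt_ext (fun p => IK p - IH p) (fun p => c p + dP p)) in E1.
    2: { intros x Hx. rewrite Rmin_left, Rmax_right in Hx by lra. apply Hid. unfold Icl; lra. }
    assert (E2 : RInt (fun p => c p + dP p) (-1) 0 = RInt c (-1) 0 + RInt dP (-1) 0).
    { exact (RInt_plus (V:=R_CompleteNormedModule) c dP (-1) 0
          (exRInt_I c (-1) 0 Cc ltac:(lra) ltac:(lra) ltac:(lra))
          (exRInt_I dP (-1) 0 CdP ltac:(lra) ltac:(lra) ltac:(lra))). }
    lra. }
  assert (Hcube : forall x, -1 < x < 0 -> c x = 0 -> a x = H1 x).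
  { intros x Hx Hcx. assert (Hx' : Icl x) by (unfold Icl; lra).
    destruct (Req_dec (a x - H1 x) 0) as [E|E]. lra. exfalso.
    unfold c in Hcx. assert (0 < a x) by (specialize (Hapos x Hx'); lra).
    assert (0 < H1 x) by auto.
    assert (0 < a x ^ 2) by (apply pow_lt; auto). assert (0 < H1 x ^ 2) by (apply pow_lt; auto).
    assert (Hden : 0 < 4 * a x ^ 2 * H1 x ^ 2) by (apply Rmult_lt_0_compat; [apply Rmult_lt_0_compat; lra|lra]).
    assert ((a x - H1 x) ^ 3 = 0).
    { apply (Rmult_eq_reg_r (/ (4 * a x ^ 2 * H1 x ^ 2))). rewrite Rmult_0_l. exact Hcx.
      apply Rgt_not_eq. apply Rinv_0_lt_compat; auto. }
    apply (pow_nonzero _ 3) in E. auto. }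
  assert (Hab : forall x, -1 < x < 0 -> a x = H1 x).
  { destruct Hord as [Hge|Hle].
    - assert (Hphi0 : Phi 0 <= 0).
      { unfold Phi. rewrite Htop. assert (0 <= K 0 - 1) by (specialize (Hge 0 ltac:(unfold Icl; lra)); lra).
        assert (0 < / F^2) by (apply Rinv_0_lt_compat; nra).
        assert (0 < rho 0) by (apply Hrhopos; unfold Icl; lra).
        assert (0 <= / F^2 * rho 0 * (K 0 - 1)) by (apply Rmult_le_pos; nra). lra. }
      assert (Hcpos : forall x, -1 < x < 0 -> 0 <= c x).
      { intros x Hx. assert (Hx' : Icl x) by (unfold Icl; lra).
        assert (Hphi : Phi x <= 0).
        { rewrite Hode' by auto.
          assert (RInt f x 0 <= 0).
          { apply RInt_le_0. lra. apply exRInt_I; auto; lra.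
            intros z Hz. unfold f. assert (Hz' : Icl z) by (unfold Icl; lra).
            assert (0 < / F^2) by (apply Rinv_0_lt_compat; nra).
            specialize (Hge z Hz'). specialize (Hrho1neg z Hz').
            assert (/ F^2 * rho1 z <= 0) by nra. nra. }
          lra. }
        assert (H1 x <= a x) by (apply phi_sign; auto; specialize (Hapos x Hx'); lra).
        unfold c. apply Rmult_le_pos. apply pow_le; lra.
        left. apply Rinv_0_lt_compat.
        assert (0 < a x) by (specialize (Hapos x Hx'); lra). assert (0 < H1 x) by auto.
        assert (0 < a x ^ 2) by (apply pow_lt; auto). assert (0 < H1 x ^ 2) by (apply pow_lt; auto).
        apply Rmult_lt_0_compat; [apply Rmult_lt_0_compat; lra|lra]. }
      intros x Hx. apply Hcube; auto. apply (pos_int_zero c); auto.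
    - assert (Hphi0 : 0 <= Phi 0).
      { unfold Phi. rewrite Htop. assert (K 0 - 1 <= 0) by (specialize (Hle 0 ltac:(unfold Icl; lra)); lra).
        assert (0 < / F^2) by (apply Rinv_0_lt_compat; nra).
        assert (0 < rho 0) by (apply Hrhopos; unfold Icl; lra).
        assert (0 <= / F^2 * rho 0) by nra.
        assert (/ F^2 * rho 0 * (K 0 - 1) <= 0) by nra. lra. }
      assert (Hcneg : forall x, -1 < x < 0 -> 0 <= - c x).
      { intros x Hx. assert (Hx' : Icl x) by (unfold Icl; lra).
        assert (Hphi : 0 <= Phi x).
        { rewrite Hode' by auto.
          assert (0 <= RInt f x 0).
          { apply RInt_ge_0. lra. apply exRInt_I; auto; lra.
            intros z Hz. unfold f. assert (Hz' : Icl z) by (unfold Icl; lra).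
            assert (0 < / F^2) by (apply Rinv_0_lt_compat; nra).
            specialize (Hle z Hz'). specialize (Hrho1neg z Hz').
            assert (/ F^2 * rho1 z <= 0) by nra. nra. }
          lra. }
        assert (a x <= H1 x) by (apply phi_sign'; auto; specialize (Hapos x Hx'); lra).
        unfold c, Rdiv. rewrite Ropp_mult_distr_l.
        apply Rmult_le_pos.
        replace (- (a x - H1 x) ^ 3) with ((H1 x - a x) ^ 3) by ring. apply pow_le; lra.
        left. apply Rinv_0_lt_compat.
        assert (0 < a x) by (specialize (Hapos x Hx'); lra). assert (0 < H1 x) by auto.
        assert (0 < a x ^ 2) by (apply pow_lt; auto). assert (0 < H1 x ^ 2) by (apply pow_lt; auto).
        apply Rmult_lt_0_compat; [apply Rmult_lt_0_compat; lra|lra]. }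
      intros x Hx. apply Hcube; auto.
      assert (- c x = 0).
      { apply (pos_int_zero (fun p => - c p)); auto. apply contI_opp; auto.
        etransitivity. exact (RInt_opp (V:=R_CompleteNormedModule) c (-1) 0
            (exRInt_I c (-1) 0 Cc ltac:(lra) ltac:(lra) ltac:(lra))).
        rewrite Hc0. unfold opp; simpl; ring. }
      lra. }
  assert (HabI : forall x, Icl x -> a x = H1 x).
  { set (D := fun y => a (clamp y) - H1 (clamp y)).
    assert (CD : forall y, continuity_pt D y) by (intros y; apply (contI_minus a H1); auto).
    assert (HD : forall y, -1 < y < 0 -> D y = 0).
    { intros y Hy. unfold D. rewrite clamp_id by (unfold Icl; lra). rewrite Hab; auto. ring. }
    intros x Hx. destruct (Req_dec x 0) as [->|Hx0].
    - assert (D 0 = 0) by (apply (cont_zero_left D (-1) 0); auto; lra).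
      unfold D in H0. rewrite clamp_id in H0 by (unfold Icl; lra). lra.
    - destruct (Req_dec x (-1)) as [->|Hx1].
      + assert (D (-1) = 0) by (apply (cont_zero_right D (-1) 0); auto; lra).
        unfold D in H0. rewrite clamp_id in H0 by (unfold Icl; lra). lra.
      + apply Hab. unfold Icl in Hx; lra. }
  intros p Hp.
  assert (Hm : Rabs (w p - w (-1)) <= 0 * Rabs (p - -1)).
  { apply (mvt_I w (fun z => a z - H1 z) 0 (-1) p); auto.
    - unfold Icl; lra.
    - intros z Hz. apply Hwd. apply (Icl_between' (-1) p); auto. unfold Icl; lra.
    - intros z Hz. rewrite HabI. rewrite Rminus_eq_0, Rabs_R0. lra.
      apply (Icl_between (-1) p); auto. unfold Icl; lra. }
  rewrite Rmult_0_l in Hm.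
  assert (w p - w (-1) = 0).
  { apply Rabs_eq_0. apply Rle_antisym; auto. apply Rabs_pos. }
  unfold w in H0. rewrite HK1, HHm1 in H0. lra.
Qed.

Lemma main_dir g gq gp gqq gpp gpq M rho rho1 H H1 F delta K :
  gbase g gq gp gqq gpp M -> glim g K -> gextra g gq gp gqq gpq rho rho1 H H1 F delta ->
  (forall t, g t (-1) = 0) -> H (-1) = 0 -> H 0 = 1 ->
  (forall x, -1 < x < 0 -> is_derive H x (H1 x)) ->
  (forall x, Icl x -> 0 < rho x) -> (forall x, -1 < x < 0 -> is_derive rho x (rho1 x)) ->
  (forall x, Icl x -> rho1 x <= 0) ->
  flow_force rho H H1 F K = flow_force rho H H1 F H ->
  ((forall p, Icl p -> H p <= K p) \/ (forall p, Icl p -> K p <= H p)) ->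
  forall p, Icl p -> K p = H p.
Proof.
  intros HB HL HE Hg1 HHm1 HH0 HHd Hrhopos Hrhod Hrho1neg Hff Hord.
  generalize HE; intros [Hd [Hdp [Hpq [Hc [Heq [Htop [Crho [Crho1 [CH [CH1 [HH1 HF]]]]]]]]]]].
  assert (HK1 : K (-1) = 0).
  { apply Rabs_eq_0. apply Rle_antisym; [|apply Rabs_pos]. apply le_epsilon. intros e He.
    destruct (HL (-1) ltac:(unfold Icl; lra) e He) as [T HT]. specialize (HT T (Rle_refl _)).
    rewrite Hg1, Rminus_0_l, Rabs_Ropp in HT. lra. }
  apply (ff_core K (aK gp) H H1 rho rho1 F delta); auto.
  - apply (lip_contI _ M). intros x y Hx Hy. apply (a_lip g gq gp gqq gpp M K); auto.
  - intros x Hx. apply (a_pos g gq gp gqq gpp M K delta); auto.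
  - intros x Hx. apply (K_deriv g gq gp gqq gpp M K); auto.
  - apply (lip_contI K M). intros x y Hx Hy. apply (K_lip g gq gp gqq gpp M); auto.
  - apply (ode_top g gq gp gqq gpp gpq M rho rho1 H H1 F delta K); auto.
  - intros p0 Hp0. assert (E := ode_full g gq gp gqq gpp gpq M rho rho1 H H1 F delta K p0 HB HL HE Hp0).
    lra.
Qed.

Lemma refl_der (f : R -> R) t l : is_derive f (-t) l -> is_derive (fun u => f (-u)) t (-l).
Proof.
  intros Hf.
  assert (Ho : is_derive (fun u : R => - u) t (-1)) by (auto_derive; auto; ring).
  assert (Hc := is_derive_comp f (fun u => - u) t l (-1) Hf Ho).
  replace (-l) with (scal (-1) l) by (unfold scal; simpl; unfold mult; simpl; ring). exact Hc.
Qed.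

Lemma dopp (f : R -> R) x l : is_derive f x l -> is_derive (fun y => - f y) x (- l).
Proof. intros H. apply (is_derive_opp f x l H). Qed.

Lemma cont_strip_2d f q p : cont_strip f -> -1 < p < 0 -> continuity_2d_pt f q p.
Proof.
  intros Hc Hp. apply continuity_2d_pt_filterlim.
  assert (Hcs := Hc q p ltac:(unfold Icl; lra)).
  intros P HP. specialize (Hcs P HP). unfold filtermap, within in *.
  assert (Hd : 0 < Rmin (p + 1) (- p)) by (apply Rmin_pos; lra).
  assert (HD : locally (q, p) (fun z : R * R => Icl (snd z))).
  { exists (mkposreal _ Hd). intros [u v] [_ Hv]. simpl.
    assert (Hv' : Rabs (v - p) < Rmin (p+1) (-p)) by exact Hv.
    apply Rabs_def2 in Hv'. unfold Icl. unfold Rmin in Hv'. destruct (Rle_dec _ _) in Hv'; lra. }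
  generalize (filter_and _ _ Hcs HD). apply filter_imp. intros z [H1 H2]. auto.
Qed.

Lemma cont2d_refl f t p : continuity_2d_pt f (-t) p -> continuity_2d_pt (fun u v => f (-u) v) t p.
Proof.
  intros H eps. destruct (H eps) as [d Hd]. exists d. intros u v Hu Hv.
  apply Hd; auto. replace (- u - - t) with (- (u - t)) by ring. rewrite Rabs_Ropp; auto.
Qed.

Lemma glim_pinf (h : R -> R -> R) (K : R -> R) :
  (forall p, Icl p -> is_lim (fun q => h q p) p_infty (K p)) -> glim h K.
Proof.
  intros Hl p Hp eps He. assert (H := proj2 (is_lim_spec _ _ _) (Hl p Hp)).
  unfold is_lim' in H. destruct (H (mkposreal eps He)) as [M HM]. exists (M + 1). intros t Ht. apply HM. lra.
Qed.

Lemma glim_minf (h : R -> R -> R) (K : R -> R) :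
  (forall p, Icl p -> is_lim (fun q => h q p) m_infty (K p)) -> glim (fun t p => h (- t) p) K.
Proof.
  intros Hl p Hp eps He. assert (H := proj2 (is_lim_spec _ _ _) (Hl p Hp)).
  unfold is_lim' in H. destruct (H (mkposreal eps He)) as [M HM]. exists (- M + 1). intros t Ht. apply HM. lra.
Qed.

Lemma gbase_plus h hq hp hqq hqp hpq hpp : C2_bdd_strip h hq hp hqq hqp hpq hpp ->
  exists M, gbase h hq hp hqq hpp M.
Proof.
  intros [Hd [_ [_ [_ [_ [_ [_ [_ [_ [_ [[M1 B1] [[M2 B2] [_ [_ [M3 B3]]]]]]]]]]]]]]].
  exists (Rabs M1 + Rabs M2 + Rabs M3).
  assert (A1 := Rle_abs M1). assert (A2 := Rle_abs M2). assert (A3 := Rle_abs M3).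
  assert (P1 := Rabs_pos M1). assert (P2 := Rabs_pos M2). assert (P3 := Rabs_pos M3).
  unfold gbase. refine (conj _ (conj _ (conj _ (conj _ (conj _ _))))); [lra| | | | |].
  - intros t p Hp. destruct (Hd t p Hp) as [D1 [D2 [D3 [D4 [D5 D6]]]]]; auto.
  - intros t p Hp. destruct (Hd t p Hp) as [D1 [D2 [D3 [D4 [D5 D6]]]]]; auto.
  - intros t p Hp. destruct (Hd t p Hp) as [D1 [D2 [D3 [D4 [D5 D6]]]]]; auto.
  - intros t p Hp. destruct (Hd t p Hp) as [D1 [D2 [D3 [D4 [D5 D6]]]]]; auto.
  - intros t p Hp. specialize (B1 t p Hp). specialize (B2 t p Hp). specialize (B3 t p Hp).
    repeat split; lra.
Qed.

Lemma gbase_minus h hq hp hqq hqp hpq hpp : C2_bdd_strip h hq hp hqq hqp hpq hpp ->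
  exists M, gbase (fun t p => h (-t) p) (fun t p => - hq (-t) p) (fun t p => hp (-t) p)
                  (fun t p => hqq (-t) p) (fun t p => hpp (-t) p) M.
Proof.
  intros [Hd [_ [_ [_ [_ [_ [_ [_ [_ [_ [[M1 B1] [[M2 B2] [_ [_ [M3 B3]]]]]]]]]]]]]]].
  exists (Rabs M1 + Rabs M2 + Rabs M3).
  assert (A1 := Rle_abs M1). assert (A2 := Rle_abs M2). assert (A3 := Rle_abs M3).
  assert (P1 := Rabs_pos M1). assert (P2 := Rabs_pos M2). assert (P3 := Rabs_pos M3).
  unfold gbase. refine (conj _ (conj _ (conj _ (conj _ (conj _ _))))); [lra| | | | |].
  - intros t p Hp. destruct (Hd (-t) p Hp) as [D1 [D2 [D3 [D4 [D5 D6]]]]].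
    apply (refl_der (fun u => h u p)); auto.
  - intros t p Hp. destruct (Hd (-t) p Hp) as [D1 [D2 [D3 [D4 [D5 D6]]]]].
    replace (hqq (-t) p) with (- - hqq (-t) p) by ring.
    apply (dopp (fun u => hq (-u) p)). apply (refl_der (fun u => hq u p)); auto.
  - intros t p Hp. destruct (Hd (-t) p Hp) as [D1 [D2 [D3 [D4 [D5 D6]]]]]; auto.
  - intros t p Hp. destruct (Hd (-t) p Hp) as [D1 [D2 [D3 [D4 [D5 D6]]]]]; auto.
  - intros t p Hp. specialize (B1 (-t) p Hp). specialize (B2 (-t) p Hp). specialize (B3 (-t) p Hp).
    repeat split; lra.
Qed.

Lemma gextra_plus h hq hp hqq hqp hpq hpp rho rho1 H H1 F delta :
  C2_bdd_strip h hq hp hqq hqp hpq hpp -> height_eq rho rho1 H H1 F h hq hp ->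
  0 < delta -> (forall q p, -1 < p < 0 -> delta <= hp q p) ->
  contI rho -> contI rho1 -> contI H -> contI H1 -> (forall p, Icl p -> 0 < H1 p) -> 0 < F ->
  gextra h hq hp hqq hpq rho rho1 H H1 F delta.
Proof.
  intros HC [Heq [Htop Hbot]] Hd Hdp C1 C2 C3 C4 HH1 HF.
  destruct HC as [Hder [_ [Cq [Cp [Cqq [_ [Cpq _]]]]]]].
  unfold gextra. repeat (split; [solve [auto]|]).
  split. intros t p Hp. destruct (Hder t p Hp) as [D1 [D2 [D3 [D4 [D5 D6]]]]]; auto.
  split. intros t p Hp. repeat split; apply cont_strip_2d; auto.
  repeat split; auto.
Qed.

Lemma gextra_minus h hq hp hqq hqp hpq hpp rho rho1 H H1 F delta :
  C2_bdd_strip h hq hp hqq hqp hpq hpp -> height_eq rho rho1 H H1 F h hq hp ->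
  0 < delta -> (forall q p, -1 < p < 0 -> delta <= hp q p) ->
  contI rho -> contI rho1 -> contI H -> contI H1 -> (forall p, Icl p -> 0 < H1 p) -> 0 < F ->
  gextra (fun t p => h (-t) p) (fun t p => - hq (-t) p) (fun t p => hp (-t) p)
         (fun t p => hqq (-t) p) (fun t p => - hpq (-t) p) rho rho1 H H1 F delta.
Proof.
  intros HC [Heq [Htop Hbot]] Hd Hdp C1 C2 C3 C4 HH1 HF.
  destruct HC as [Hder [_ [Cq [Cp [Cqq [_ [Cpq _]]]]]]].
  unfold gextra. split; auto. split. intros t p Hp; auto.
  split.
  { intros t p Hp. destruct (Hder (-t) p Hp) as [D1 [D2 [D3 [D4 [D5 D6]]]]].
    apply (refl_der (fun u => hp u p)); auto. }
  split.
  { intros t p Hp. repeat split.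
    - apply (continuity_2d_pt_opp (fun u v => hq (-u) v)). apply cont2d_refl. apply cont_strip_2d; auto.
    - apply cont2d_refl. apply cont_strip_2d; auto.
    - apply cont2d_refl. apply cont_strip_2d; auto.
    - apply (continuity_2d_pt_opp (fun u v => hpq (-u) v)). apply cont2d_refl. apply cont_strip_2d; auto. }
  split.
  { intros t p Hp. destruct (Heq (-t) p Hp) as [A [B [HA [HB HAB]]]].
    exists A, B. split; [|split; auto].
    - eapply is_derive_ext; [|exact HA]. intros p'. simpl. unfold Rdiv. ring.
    - replace B with (- - B) by ring.
      eapply is_derive_ext; [|apply (dopp (fun u => hq (-u) p / hp (-u) p)); apply (refl_der (fun u => hq u p / hp u p)); exact HB].
      intros u. simpl. unfold Rdiv. ring. }
  split.
  { intros t. etransitivity; [|apply (Htop (-t))]. unfold Rdiv. simpl. ring. }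
  repeat split; auto.
Qed.

Theorem corollary4p11
  (alpha F : R) (rho rho1 rho2 H H1 H2 H3 : R -> R)
  (h hq hp hqq hqp hpq hpp : R -> R -> R) (Hplus Hminus : R -> R) :
  0 < alpha < 1 ->
  C2a_I alpha rho rho1 rho2 ->
  (forall p, Icl p -> 0 < rho p) ->
  (forall p, Icl p -> rho1 p <= 0) ->
  C3a_I alpha H H1 H2 H3 ->
  H (-1) = 0 -> H 0 = 1 ->
  (forall p, Icl p -> 0 < H1 p) ->
  0 < F ->
  C2_bdd_strip h hq hp hqq hqp hpq hpp ->
  height_eq rho rho1 H H1 F h hq hp ->
  (exists delta, 0 < delta /\ forall q p, -1 < p < 0 -> delta <= hp q p) ->
  (forall p, Icl p -> is_lim (fun q => h q p) p_infty (Hplus p)) ->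
  (forall p, Icl p -> is_lim (fun q => h q p) m_infty (Hminus p)) ->
  flow_force rho H H1 F Hplus = flow_force rho H H1 F H ->
  flow_force rho H H1 F Hminus = flow_force rho H H1 F H ->
  (((forall p, Icl p -> H p <= Hplus p) \/ (forall p, Icl p -> Hplus p <= H p)) ->
     forall p, Icl p -> Hplus p = H p) /\
  (((forall p, Icl p -> H p <= Hminus p) \/ (forall p, Icl p -> Hminus p <= H p)) ->
     forall p, Icl p -> Hminus p = H p).
Proof.
  intros Halpha [Drho [Drho1 _]] Hrhopos Hrho1neg [DH [DH1 _]] HHm1 HH0 HH1pos HF HC Heqn
    [delta [Hdelta Hdp]] Hlp Hlm Hffp Hffm.
  assert (Crho : contI rho) by (apply (derI_cont rho rho1); auto).
  assert (Crho1 : contI rho1) by (apply (derI_cont rho1 rho2); auto).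
  assert (CH : contI H) by (apply (derI_cont H H1); auto).
  assert (CH1 : contI H1) by (apply (derI_cont H1 H2); auto).
  assert (Hrhod : forall x, -1 < x < 0 -> is_derive rho x (rho1 x)) by (intros; apply derI_interior'; auto).
  assert (HHd : forall x, -1 < x < 0 -> is_derive H x (H1 x)) by (intros; apply derI_interior'; auto).
  assert (Hbot : forall q, h q (-1) = 0) by apply Heqn.
  split.
  - intros Hord.
    destruct (gbase_plus h hq hp hqq hqp hpq hpp HC) as [M HB].
    apply (main_dir h hq hp hqq hpp hpq M rho rho1 H H1 F delta Hplus); auto.
    + apply glim_pinf; auto.
    + apply (gextra_plus h hq hp hqq hqp hpq hpp); auto.
  - intros Hord.
    destruct (gbase_minus h hq hp hqq hqp hpq hpp HC) as [M HB].
    apply (main_dir (fun t p => h (-t) p) (fun t p => - hq (-t) p) (fun t p => hp (-t) p)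
             (fun t p => hqq (-t) p) (fun t p => hpp (-t) p) (fun t p => - hpq (-t) p)
             M rho rho1 H H1 F delta Hminus); auto.
    + apply glim_minf; auto.
    + apply (gextra_minus h hq hp hqq hqp hpq hpp); auto.
Qed.
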